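(* Over $\mathsf{RCA}_0$, $\Sigma^0_2\text{-}\mathsf{IND}$ implies Bounded-width König's Lemma: for every finite set $Q$ and every graph $G$ whose vertices belong to $Q\times\mathbb{N}$ and whose edges are all of the form $((q,i),(q',i+1))$ with $q,q'\in Q$, if there are arbitrarily long finite paths in $G$ starting in some vertex $(q,0)$, then there is an infinite path in $G$ starting in $(q,0)$.
   Context: $\mathsf{RCA}_0$: second-order arithmetic with $\Delta^0_1$-comprehension and $\Sigma^0_1$-induction. $\Sigma^0_2\text{-}\mathsf{IND}$: the induction scheme for $\Sigma^0_2$ formulae with parameters. The graph $G$ is given as a set (of vertices and edges). *)

(* Defs.v *)
(* Semantic (model-theoretic) rendering of
   "over RCA_0, Sigma^0_2-IND implies BWKL": every L_2-structure satisfying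
   the axioms of RCA_0 and Sigma^0_2 induction satisfies BWKL.
   (Equivalent to provability by the completeness theorem for L_2,
   which is two-sorted first-order logic.) *)

Record L2str := {
  M : Type;                      (* first-order part (numbers) *)
  S : Type;                      (* second-order part (sets) *)
  mem : M -> S -> Prop;
  zero : M;
  one : M;
  add : M -> M -> M;
  mul : M -> M -> M;
  lt : M -> M -> Prop
}.

Arguments mem {_} _ _.
Arguments zero {_}.
Arguments one {_}.
Arguments add {_} _ _.
Arguments mul {_} _ _.
Arguments lt {_} _ _.

Definition le {A : L2str} (x y : M A) : Prop := lt x y \/ x = y.

Inductive term : Type :=
| tvar : nat -> term
| tzero : term
| tone : term
| tadd : term -> term -> term
| tmul : term -> term -> term.

Inductive form : Type :=
| fEq : term -> term -> form
| fLt : term -> term -> form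
| fMem : term -> nat -> form
| fNot : form -> form
| fAnd : form -> form -> form
| fOr : form -> form -> form
| fImp : form -> form -> form
| fAll : nat -> form -> form
| fEx : nat -> form -> form
| fBAll : nat -> term -> form -> form
| fBEx : nat -> term -> form -> form
| fAllS : nat -> form -> form
| fExS : nat -> form -> form.

Definition upd {T : Type} (e : nat -> T) (x : nat) (v : T) : nat -> T :=
  fun y => if Nat.eqb y x then v else e y.

Fixpoint teval (A : L2str) (e : nat -> M A) (t : term) : M A :=
  match t with
  | tvar n => e n
  | tzero => zero
  | tone => one
  | tadd t1 t2 => add (teval A e t1) (teval A e t2)
  | tmul t1 t2 => mul (teval A e t1) (teval A e t2)
  end.

(** Satisfaction; the bound of a bounded quantifier is evaluated in the
    outer environment. *)
Fixpoint sat (A : L2str) (e : nat -> M A) (es : nat -> S A) (f : form) : Prop :=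
  match f with
  | fEq t1 t2 => teval A e t1 = teval A e t2
  | fLt t1 t2 => lt (teval A e t1) (teval A e t2)
  | fMem t X => mem (teval A e t) (es X)
  | fNot g => ~ sat A e es g
  | fAnd g h => sat A e es g /\ sat A e es h
  | fOr g h => sat A e es g \/ sat A e es h
  | fImp g h => sat A e es g -> sat A e es h
  | fAll x g => forall m : M A, sat A (upd e x m) es g
  | fEx x g => exists m : M A, sat A (upd e x m) es g
  | fBAll x t g => forall m : M A, lt m (teval A e t) -> sat A (upd e x m) es g
  | fBEx x t g => exists m : M A, lt m (teval A e t) /\ sat A (upd e x m) es g
  | fAllS X g => forall s : S A, sat A e (upd es X s) g
  | fExS X g => exists s : S A, sat A e (upd es X s) g
  end.

Fixpoint isDelta0 (f : form) : bool :=
  match f with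
  | fEq _ _ | fLt _ _ | fMem _ _ => true
  | fNot g => isDelta0 g
  | fAnd g h | fOr g h | fImp g h => isDelta0 g && isDelta0 h
  | fBAll _ _ g | fBEx _ _ g => isDelta0 g
  | _ => false
  end.

Inductive isSigma1 : form -> Prop :=
| S1_D0 : forall f, isDelta0 f = true -> isSigma1 f
| S1_ex : forall x f, isSigma1 f -> isSigma1 (fEx x f).

Inductive isPi1 : form -> Prop :=
| P1_D0 : forall f, isDelta0 f = true -> isPi1 f
| P1_all : forall x f, isPi1 f -> isPi1 (fAll x f).

Inductive isSigma2 : form -> Prop :=
| S2_P1 : forall f, isPi1 f -> isSigma2 f
| S2_ex : forall x f, isSigma2 f -> isSigma2 (fEx x f).

Definition induction_for (A : L2str) (cls : form -> Prop) : Prop :=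
  forall (phi : form), cls phi ->
  forall (x : nat) (e : nat -> M A) (es : nat -> S A),
    sat A (upd e x zero) es phi ->
    (forall m : M A, sat A (upd e x m) es phi -> sat A (upd e x (add m one)) es phi) ->
    forall m : M A, sat A (upd e x m) es phi.

Definition Delta01_comprehension (A : L2str) : Prop :=
  forall (phi psi : form), isSigma1 phi -> isPi1 psi ->
  forall (x : nat) (e : nat -> M A) (es : nat -> S A),
    (forall m : M A, sat A (upd e x m) es phi <-> sat A (upd e x m) es psi) ->
    exists X : S A, forall m : M A, mem m X <-> sat A (upd e x m) es phi.

Record RCA0 (A : L2str) : Prop := {
  ax_succ_ne0 : forall m : M A, add m one <> zero;
  ax_succ_inj : forall m n : M A, add m one = add n one -> m = n;
  ax_add0 : forall m : M A, add m zero = m;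
  ax_addS : forall m n : M A, add m (add n one) = add (add m n) one;
  ax_mul0 : forall m : M A, mul m zero = zero;
  ax_mulS : forall m n : M A, mul m (add n one) = add (mul m n) m;
  ax_lt0 : forall m : M A, ~ lt m zero;
  ax_ltS : forall m n : M A, lt m (add n one) <-> (lt m n \/ m = n);
  ax_Sigma01_IND : induction_for A isSigma1;
  ax_Delta01_CA : Delta01_comprehension A
}.

Definition Sigma02_IND (A : L2str) : Prop := induction_for A isSigma2.

(** Cantor pairing (i,j) |-> (i+j)^2 + i, as in Simpson II.2. *)
Definition pairM {A : L2str} (a b : M A) : M A :=
  add (mul (add a b) (add a b)) a.

(** A path is represented by its set of vertices (one vertex per level,
    since edges go from level i to level i+1). A finite path of length n
    from (q,0) visits levels 0..n. *)
Definition finPath {A : L2str} (V E : S A) (q n : M A) (P : S A) : Prop :=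
  (forall v, mem v P -> mem v V /\ exists q' i, v = pairM q' i /\ le i n) /\
  mem (pairM q zero) P /\
  (forall i, le i n -> exists q', mem (pairM q' i) P /\
       forall q'', mem (pairM q'' i) P -> q'' = q') /\
  (forall i q1 q2, lt i n -> mem (pairM q1 i) P -> mem (pairM q2 (add i one)) P ->
       mem (pairM (pairM q1 i) (pairM q2 (add i one))) E).

Definition infPath {A : L2str} (V E : S A) (q : M A) (P : S A) : Prop :=
  (forall v, mem v P -> mem v V) /\
  mem (pairM q zero) P /\
  (forall i, exists q', mem (pairM q' i) P /\
       forall q'', mem (pairM q'' i) P -> q'' = q') /\
  (forall i q1 q2, mem (pairM q1 i) P -> mem (pairM q2 (add i one)) P ->
       mem (pairM (pairM q1 i) (pairM q2 (add i one))) E).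

Definition BWKL (A : L2str) : Prop :=
  forall (Q V E : S A),
    (* Q finite *)
    (exists b : M A, forall x, mem x Q -> lt x b) ->
    (forall v, mem v V -> exists q i, mem q Q /\ v = pairM q i) ->
    (forall u, mem u E -> exists q i q', mem q Q /\ mem q' Q /\
        u = pairM (pairM q i) (pairM q' (add i one)) /\
        mem (pairM q i) V /\ mem (pairM q' (add i one)) V) ->
    forall q : M A,
      (forall n : M A, exists P : S A, finPath V E q n P) ->
      exists P : S A, infPath V E q P.

(* Main.v *)
Require Import Defs.
From Stdlib Require Import List Classical Setoid Ring.
Import ListNotations.

Section Main.
Variable A : L2str.
Variable R : RCA0 A.
Variable s0 : S A.

Local Notation "x ⊕ y" := (add x y) (at level 50, left associativity).
Local Notation "x ⊗ y" := (mul x y) (at level 40, left associativity).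
Local Notation "x ≺ y" := (lt x y) (at level 70).
Local Notation "x ≼ y" := (le x y) (at level 70).
Local Notation MA := (M A).

Definition env (l : list MA) : nat -> MA := fun k => nth k l zero.
Definition senv (l : list (S A)) : nat -> S A := fun k => nth k l s0.

Lemma IND0 (f : form) (Hf : isDelta0 f = true) (e : nat -> MA) (es : nat -> S A)
  (P : MA -> Prop) :
  (forall m, sat A (upd e 0 m) es f <-> P m) -> P zero ->
  (forall m, P m -> P (m ⊕ one)) -> forall m, P m.
Proof.
  intros H H0 HS m. apply H.
  apply (ax_Sigma01_IND _ R f (S1_D0 _ Hf) 0 e es).
  - apply H, H0.
  - intros k Hk. apply H, HS, H, Hk.
Qed.

Lemma IND1 (f : form) (Hf : isSigma1 f) (e : nat -> MA) (es : nat -> S A)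
  (P : MA -> Prop) :
  (forall m, sat A (upd e 0 m) es f <-> P m) -> P zero ->
  (forall m, P m -> P (m ⊕ one)) -> forall m, P m.
Proof.
  intros H H0 HS m. apply H.
  apply (ax_Sigma01_IND _ R f Hf 0 e es).
  - apply H, H0.
  - intros k Hk. apply H, HS, H, Hk.
Qed.

Ltac ind f l :=
  match goal with |- forall m, @?P m =>
    apply (IND0 f eq_refl (env l) (fun _ => s0) P); [intro; reflexivity | | ] end.

Lemma add_0_l (m : MA) : zero ⊕ m = m.
Proof.
  revert m. ind (fEq (tadd tzero (tvar 0)) (tvar 0)) (@nil MA).
  - apply (ax_add0 _ R).
  - intros m H. rewrite (ax_addS _ R), H. reflexivity.
Qed.

Lemma add_S_l (a : MA) (m : MA) : (a ⊕ one) ⊕ m = (a ⊕ m) ⊕ one.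
Proof.
  revert m. ind (fEq (tadd (tadd (tvar 1) tone) (tvar 0)) (tadd (tadd (tvar 1) (tvar 0)) tone)) [zero; a].
  - rewrite !(ax_add0 _ R). reflexivity.
  - intros m H. rewrite !(ax_addS _ R), H. reflexivity.
Qed.

Lemma add_comm (a : MA) (b : MA) : a ⊕ b = b ⊕ a.
Proof.
  revert b. ind (fEq (tadd (tvar 1) (tvar 0)) (tadd (tvar 0) (tvar 1))) [zero; a].
  - rewrite (ax_add0 _ R), add_0_l. reflexivity.
  - intros m H. rewrite (ax_addS _ R), H, add_S_l. reflexivity.
Qed.

Lemma add_assoc (a : MA) (b : MA) (c : MA) : a ⊕ (b ⊕ c) = a ⊕ b ⊕ c.
Proof.
  revert c. ind (fEq (tadd (tvar 1) (tadd (tvar 2) (tvar 0))) (tadd (tadd (tvar 1) (tvar 2)) (tvar 0))) [zero; a; b].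
  - rewrite !(ax_add0 _ R). reflexivity.
  - intros m H. rewrite !(ax_addS _ R), H. reflexivity.
Qed.

Lemma mul_0_l (m : MA) : zero ⊗ m = zero.
Proof.
  revert m. ind (fEq (tmul tzero (tvar 0)) tzero) (@nil MA).
  - apply (ax_mul0 _ R).
  - intros m H. rewrite (ax_mulS _ R), H, (ax_add0 _ R). reflexivity.
Qed.

Lemma mul_S_l (a : MA) (m : MA) : (a ⊕ one) ⊗ m = a ⊗ m ⊕ m.
Proof.
  revert m. ind (fEq (tmul (tadd (tvar 1) tone) (tvar 0)) (tadd (tmul (tvar 1) (tvar 0)) (tvar 0))) [zero; a].
  - rewrite !(ax_mul0 _ R), (ax_add0 _ R). reflexivity.
  - intros m H. rewrite !(ax_mulS _ R), H, !(ax_addS _ R).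
    f_equal. rewrite <- !add_assoc. f_equal. apply add_comm.
Qed.

Lemma mul_comm (a : MA) (b : MA) : a ⊗ b = b ⊗ a.
Proof.
  revert b. ind (fEq (tmul (tvar 1) (tvar 0)) (tmul (tvar 0) (tvar 1))) [zero; a].
  - rewrite (ax_mul0 _ R), mul_0_l. reflexivity.
  - intros m H. rewrite (ax_mulS _ R), H, mul_S_l. reflexivity.
Qed.

Lemma mul_distr (a : MA) (b : MA) (c : MA) : a ⊗ (b ⊕ c) = a ⊗ b ⊕ a ⊗ c.
Proof.
  revert c. ind (fEq (tmul (tvar 1) (tadd (tvar 2) (tvar 0))) (tadd (tmul (tvar 1) (tvar 2)) (tmul (tvar 1) (tvar 0)))) [zero; a; b].
  - rewrite !(ax_add0 _ R), (ax_mul0 _ R), (ax_add0 _ R). reflexivity.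
  - intros m H. rewrite (ax_addS _ R), !(ax_mulS _ R), H, add_assoc. reflexivity.
Qed.

Lemma mul_assoc (a : MA) (b : MA) (c : MA) : a ⊗ (b ⊗ c) = a ⊗ b ⊗ c.
Proof.
  revert c. ind (fEq (tmul (tvar 1) (tmul (tvar 2) (tvar 0))) (tmul (tmul (tvar 1) (tvar 2)) (tvar 0))) [zero; a; b].
  - rewrite !(ax_mul0 _ R). reflexivity.
  - intros m H. rewrite !(ax_mulS _ R), mul_distr, H. reflexivity.
Qed.

Lemma one_eq : (one : MA) = zero ⊕ one.
Proof. rewrite add_0_l. reflexivity. Qed.

Lemma mul_1_l (m : MA) : one ⊗ m = m.
Proof. rewrite one_eq, mul_S_l, mul_0_l, add_0_l. reflexivity. Qed.

Lemma MA_srt : semi_ring_theory (@zero A) one add mul eq.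
Proof.
  constructor.
  - exact add_0_l.
  - exact add_comm.
  - exact add_assoc.
  - exact mul_1_l.
  - exact mul_0_l.
  - exact mul_comm.
  - exact mul_assoc.
  - intros n m p. rewrite mul_comm, mul_distr, (mul_comm p n), (mul_comm p m). reflexivity.
Qed.

Add Ring MAring : MA_srt.

Lemma lt_S (m : MA) : m ≺ m ⊕ one.
Proof. apply (ax_ltS _ R). right; reflexivity. Qed.

Lemma lt_S_iff (m : MA) (n : MA) : m ≺ n ⊕ one <-> m ≼ n.
Proof. apply (ax_ltS _ R). Qed.

Lemma lt_0 (m : MA) : ~ m ≺ zero.
Proof. apply (ax_lt0 _ R). Qed.

Lemma le_0 (m : MA) : zero ≼ m.
Proof.
  revert m. ind (fOr (fLt tzero (tvar 0)) (fEq tzero (tvar 0))) (@nil MA).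
  - right; reflexivity.
  - intros m H. left. apply lt_S_iff. exact H.
Qed.

Lemma lt_S_mono (k : MA) (n : MA) : k ≺ n -> k ⊕ one ≺ n ⊕ one.
Proof.
  revert n. ind (fImp (fLt (tvar 1) (tvar 0)) (fLt (tadd (tvar 1) tone) (tadd (tvar 0) tone))) [zero; k].
  - intro H. exfalso. exact (lt_0 _ H).
  - intros m IH H. apply lt_S_iff in H. destruct H as [H|H].
    + apply lt_S_iff. left. apply IH, H.
    + subst. apply lt_S.
Qed.

Lemma lt_add_S (a : MA) (k : MA) : a ≺ a ⊕ k ⊕ one.
Proof.
  revert k. ind (fLt (tvar 1) (tadd (tadd (tvar 1) (tvar 0)) tone)) [zero; a].
  - rewrite (ax_add0 _ R). apply lt_S.
  - intros m H. apply lt_S_iff. left. rewrite (ax_addS _ R). exact H.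
Qed.

Lemma lt_ex (a : MA) (b : MA) : a ≺ b -> exists k, b = a ⊕ k ⊕ one.
Proof.
  revert a. cut (forall b a : MA, a ≺ b -> exists k, k ≺ b /\ b = a ⊕ k ⊕ one).
  { intros H a Hab. destruct (H b a Hab) as [k [_ Hk]]. eauto. }
  ind (fBAll 1 (tvar 0) (fBEx 2 (tvar 0) (fEq (tvar 0) (tadd (tadd (tvar 1) (tvar 2)) tone)))) (@nil MA).
  - intros a H. exfalso. exact (lt_0 _ H).
  - intros m IH a H. apply lt_S_iff in H. destruct H as [H|H].
    + destruct (IH a H) as [k [Hk E]]. exists (k ⊕ one). split.
      * apply lt_S_mono, Hk.
      * rewrite E. ring.
    + subst. exists zero. split.
      * apply lt_S_iff, le_0.
      * ring.
Qed.

Lemma add_cancel (a : MA) (b : MA) (c : MA) : a ⊕ c = b ⊕ c -> a = b.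
Proof.
  revert c. ind (fImp (fEq (tadd (tvar 1) (tvar 0)) (tadd (tvar 2) (tvar 0))) (fEq (tvar 1) (tvar 2))) [zero; a; b].
  - rewrite !(ax_add0 _ R). auto.
  - intros m IH H. apply IH. apply (ax_succ_inj _ R). rewrite <- !(ax_addS _ R). exact H.
Qed.

Lemma add_cancel_l (a : MA) (b : MA) (c : MA) : c ⊕ a = c ⊕ b -> a = b.
Proof. rewrite (add_comm c a), (add_comm c b). apply add_cancel. Qed.

Lemma succ_ne0 (m : MA) : m ⊕ one <> zero.
Proof. apply (ax_succ_ne0 _ R). Qed.

Lemma lt_irrefl (a : MA) : ~ a ≺ a.
Proof.
  intro H. destruct (lt_ex _ _ H) as [k Hk].
  assert (a ⊕ zero = a ⊕ (k ⊕ one)) by (rewrite Hk at 1; ring).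
  apply add_cancel_l in H0. symmetry in H0. exact (succ_ne0 _ H0).
Qed.

Lemma lt_trans (a : MA) (b : MA) (c : MA) : a ≺ b -> b ≺ c -> a ≺ c.
Proof.
  intros H1 H2. destruct (lt_ex _ _ H1) as [k Hk]. destruct (lt_ex _ _ H2) as [l Hl].
  subst. replace (a ⊕ k ⊕ one ⊕ l ⊕ one) with (a ⊕ (k ⊕ l ⊕ one) ⊕ one) by ring.
  apply lt_add_S.
Qed.

Lemma lt_add_r (a : MA) (b : MA) (c : MA) : a ≺ b -> a ⊕ c ≺ b ⊕ c.
Proof.
  intros H. destruct (lt_ex _ _ H) as [k Hk]. subst.
  replace (a ⊕ k ⊕ one ⊕ c) with (a ⊕ c ⊕ k ⊕ one) by ring. apply lt_add_S.
Qed.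

Lemma lt_add_l (a : MA) (b : MA) (c : MA) : a ≺ b -> c ⊕ a ≺ c ⊕ b.
Proof. rewrite (add_comm c a), (add_comm c b). apply lt_add_r. Qed.

Lemma zero_or_succ (m : MA) : m = zero \/ exists k, m = k ⊕ one.
Proof.
  destruct (le_0 m) as [H|H]; [|left; auto].
  right. destruct (lt_ex _ _ H) as [k Hk]. exists k. rewrite Hk. ring.
Qed.

Lemma trich (a : MA) (b : MA) : a ≺ b \/ a = b \/ b ≺ a.
Proof.
  revert b. ind (fOr (fLt (tvar 1) (tvar 0)) (fOr (fEq (tvar 1) (tvar 0)) (fLt (tvar 0) (tvar 1)))) [zero; a].
  - destruct (le_0 a) as [H|H]; auto.
  - intros m [H|[H|H]].
    + left. apply lt_S_iff. left; auto.
    + left. subst. apply lt_S.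
    + destruct (lt_ex _ _ H) as [k Hk]. subst.
      destruct (zero_or_succ k) as [->|[k' ->]].
      * right; left. ring.
      * right; right. replace (m ⊕ (k' ⊕ one) ⊕ one) with (m ⊕ one ⊕ k' ⊕ one) by ring.
        apply lt_add_S.
Qed.


Lemma le_refl (a : MA) : a ≼ a.
Proof. right; reflexivity. Qed.
Lemma lt_le (a b : MA) : a ≺ b -> a ≼ b.
Proof. left; auto. Qed.
Lemma le_lt_trans (a b c : MA) : a ≼ b -> b ≺ c -> a ≺ c.
Proof. intros [H|H] H2; [eapply lt_trans; eauto | subst; auto]. Qed.
Lemma lt_le_trans (a b c : MA) : a ≺ b -> b ≼ c -> a ≺ c.
Proof. intros H [H2|H2]; [eapply lt_trans; eauto | subst; auto]. Qed.
Lemma le_trans (a b c : MA) : a ≼ b -> b ≼ c -> a ≼ c.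
Proof. intros [H|H] H2; [left; eapply lt_le_trans; eauto | subst; auto]. Qed.
Lemma lt_asym (a b : MA) : a ≺ b -> ~ b ≺ a.
Proof. intros H H2. apply (lt_irrefl a). eapply lt_trans; eauto. Qed.
Lemma le_not_lt (a b : MA) : a ≼ b -> ~ b ≺ a.
Proof. intros [H|H] H2; [eapply lt_asym; eauto | subst; eapply lt_irrefl; eauto]. Qed.
Lemma not_lt_le (a b : MA) : ~ b ≺ a -> a ≼ b.
Proof. intros H. destruct (trich a b) as [H1|[H1|H1]]; [left|right|]; auto. contradiction. Qed.
Lemma lt_not_le (a b : MA) : a ≺ b -> ~ b ≼ a.
Proof. intros H H2. eapply le_not_lt; eauto. Qed.
Lemma le_antisym (a b : MA) : a ≼ b -> b ≼ a -> a = b.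
Proof. intros [H|H] H2; auto. exfalso. eapply le_not_lt; eauto. Qed.
Lemma lt_S_le (a b : MA) : a ≺ b <-> a ⊕ one ≼ b.
Proof.
  split.
  - intro H. destruct (lt_ex _ _ H) as [k ->]. destruct (zero_or_succ k) as [->|[k' ->]].
    + right. ring.
    + left. replace (a ⊕ (k' ⊕ one) ⊕ one) with (a ⊕ one ⊕ k' ⊕ one) by ring. apply lt_add_S.
  - intro H. eapply lt_le_trans; [apply lt_S|exact H].
Qed.
Lemma le_add_r (a c : MA) : a ≼ a ⊕ c.
Proof.
  destruct (zero_or_succ c) as [->|[k ->]].
  - right. ring.
  - left. rewrite add_assoc. apply lt_add_S.
Qed.
Lemma le_add_l (a c : MA) : a ≼ c ⊕ a.
Proof. rewrite add_comm. apply le_add_r. Qed.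
Lemma le_ex (a b : MA) : a ≼ b -> exists k, b = a ⊕ k.
Proof.
  intros [H|H].
  - destruct (lt_ex _ _ H) as [k ->]. exists (k ⊕ one). ring.
  - subst. exists zero. ring.
Qed.
Lemma le_add_mono (a b c d : MA) : a ≼ b -> c ≼ d -> a ⊕ c ≼ b ⊕ d.
Proof.
  intros H1 H2. destruct (le_ex _ _ H1) as [k ->]. destruct (le_ex _ _ H2) as [l ->].
  replace (a ⊕ k ⊕ (c ⊕ l)) with (a ⊕ c ⊕ (k ⊕ l)) by ring. apply le_add_r.
Qed.
Lemma lt_le_add (a b c d : MA) : a ≺ b -> c ≼ d -> a ⊕ c ≺ b ⊕ d.
Proof.
  intros H1 H2. apply lt_S_le in H1. apply lt_S_le.
  replace (a ⊕ c ⊕ one) with (a ⊕ one ⊕ c) by ring. apply le_add_mono; auto.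
Qed.
Lemma le_mul_mono (a b c d : MA) : a ≼ b -> c ≼ d -> a ⊗ c ≼ b ⊗ d.
Proof.
  intros H1 H2. destruct (le_ex _ _ H1) as [k ->]. destruct (le_ex _ _ H2) as [l ->].
  replace ((a ⊕ k) ⊗ (c ⊕ l)) with (a ⊗ c ⊕ (a ⊗ l ⊕ k ⊗ c ⊕ k ⊗ l)) by ring. apply le_add_r.
Qed.
Lemma lt_0_1 : (zero : MA) ≺ one.
Proof. rewrite one_eq. apply lt_S. Qed.
Lemma lt_0_S (a : MA) : zero ≺ a ⊕ one.
Proof. apply lt_S_iff, le_0. Qed.
Lemma mul_pos (a b : MA) : zero ≺ a -> zero ≺ b -> zero ≺ a ⊗ b.
Proof.
  intros H1 H2. destruct (lt_ex _ _ H1) as [k ->]. destruct (lt_ex _ _ H2) as [l ->].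
  replace ((zero ⊕ k ⊕ one) ⊗ (zero ⊕ l ⊕ one)) with ((k ⊗ l ⊕ k ⊕ l) ⊕ one) by ring. apply lt_0_S.
Qed.
Lemma le_mul_pos (a c : MA) : zero ≺ c -> a ≼ a ⊗ c.
Proof.
  intros H. destruct (lt_ex _ _ H) as [k ->].
  replace (a ⊗ (zero ⊕ k ⊕ one)) with (a ⊕ a ⊗ k) by ring. apply le_add_r.
Qed.
Lemma lt_mul_r (a b c : MA) : a ≺ b -> zero ≺ c -> a ⊗ c ≺ b ⊗ c.
Proof.
  intros H1 H2. destruct (lt_ex _ _ H1) as [k ->].
  replace ((a ⊕ k ⊕ one) ⊗ c) with (a ⊗ c ⊕ (k ⊗ c ⊕ c)) by ring.
  destruct (lt_ex _ _ H2) as [l ->].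
  replace (k ⊗ (zero ⊕ l ⊕ one) ⊕ (zero ⊕ l ⊕ one)) with ((k ⊗ (zero ⊕ l ⊕ one) ⊕ l) ⊕ one) by ring.
  rewrite add_assoc. apply lt_add_S.
Qed.
Lemma le_sq (u : MA) : u ≼ u ⊗ u.
Proof.
  destruct (le_0 u) as [H|H].
  - apply le_mul_pos; auto.
  - subst. right. ring.
Qed.

Lemma pm_lt_aux (a b a' b' : MA) : a ⊕ b ≺ a' ⊕ b' -> pairM a b ≺ pairM a' b'.
Proof.
  unfold pairM. intro H. set (s := a ⊕ b) in *. set (s' := a' ⊕ b') in *.
  apply lt_S_le in H.
  assert (Ha : a ≼ s) by apply le_add_r.
  apply le_lt_trans with (s ⊗ s ⊕ s). { apply le_add_mono; [apply le_refl|exact Ha]. }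
  apply lt_le_trans with ((s ⊕ one) ⊗ (s ⊕ one)).
  { replace ((s ⊕ one) ⊗ (s ⊕ one)) with (s ⊗ s ⊕ s ⊕ s ⊕ one) by ring. apply lt_add_S. }
  apply le_trans with (s' ⊗ s'). { apply le_mul_mono; auto. }
  apply le_add_r.
Qed.

Lemma pm_inj (a b a' b' : MA) : pairM a b = pairM a' b' -> a = a' /\ b = b'.
Proof.
  intro H. destruct (trich (a ⊕ b) (a' ⊕ b')) as [H1|[H1|H1]].
  - apply pm_lt_aux in H1. rewrite H in H1. exfalso; eapply lt_irrefl; eauto.
  - unfold pairM in H. rewrite H1 in H. apply add_cancel_l in H. subst.
    split; auto. eapply add_cancel_l; eauto.
  - apply pm_lt_aux in H1. rewrite H in H1. exfalso; eapply lt_irrefl; eauto.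
Qed.

Lemma pm_lt (x i b n : MA) : x ≺ b -> i ≼ n -> pairM x i ≺ pairM b n.
Proof. intros H1 H2. apply pm_lt_aux. apply lt_le_add; auto. Qed.

Lemma pm_le_mono (x i b n : MA) : x ≼ b -> i ≼ n -> pairM x i ≼ pairM b n.
Proof. intros H1 H2. unfold pairM. apply le_add_mono; auto. apply le_mul_mono; apply le_add_mono; auto. Qed.

Lemma le_pm_r (x i : MA) : i ≼ pairM x i.
Proof.
  unfold pairM. apply le_trans with (x ⊕ i). apply le_add_l.
  apply le_trans with ((x ⊕ i) ⊗ (x ⊕ i)). apply le_sq. apply le_add_r.
Qed.
Lemma le_pm_l (x i : MA) : x ≼ pairM x i.
Proof. unfold pairM. apply le_add_l. Qed.

Definition dvd (a c : MA) := exists s, a ⊗ s = c.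
Definition dvdb (a c : MA) := exists s, s ≺ c ⊕ one /\ a ⊗ s = c.

Lemma dvd_dvdb (a c : MA) : dvd a c <-> dvdb a c.
Proof.
  split.
  - intros [s Hs]. destruct (le_0 a) as [Ha|Ha].
    + exists s. split; auto. apply lt_S_iff. rewrite <- Hs. rewrite mul_comm. apply le_mul_pos; auto.
    + subst. rewrite mul_0_l. exists zero. split. apply lt_0_S. ring.
  - intros [s [_ Hs]]. exists s; auto.
Qed.

Lemma dvd_mul_r (a c x : MA) : dvd a c -> dvd a (c ⊗ x).
Proof. intros [s <-]. exists (s ⊗ x). ring. Qed.
Lemma dvd_mul_l (a c x : MA) : dvd a c -> dvd a (x ⊗ c).
Proof. intros [s <-]. exists (s ⊗ x). ring. Qed.
Lemma dvd_self (a x : MA) : dvd a (a ⊗ x).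
Proof. exists x; auto. Qed.
Lemma dvd_self' (a x : MA) : dvd a (x ⊗ a).
Proof. exists x; ring. Qed.

Lemma dvd_sub (m X c : MA) : dvd m (X ⊕ c) -> dvd m X -> dvd m c.
Proof.
  intros [s Hs] [t Ht]. destruct (le_0 m) as [Hm|Hm].
  - destruct (trich s t) as [H|[H|H]].
    + exfalso. assert (m ⊗ s ≺ m ⊗ t) by (rewrite !(mul_comm m); apply lt_mul_r; auto).
      rewrite Hs, Ht in H0. apply (le_not_lt X (X ⊕ c)); auto. apply le_add_r.
    + rewrite H, Ht in Hs. exists zero. apply (add_cancel_l _ _ X). rewrite <- Hs. ring.
    + destruct (lt_ex _ _ H) as [k Hk]. rewrite Hk in Hs. exists (k ⊕ one). idtac.
      apply (add_cancel_l _ _ X). rewrite <- Hs. rewrite <- Ht. ring.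
  - subst m. rewrite mul_0_l in Hs, Ht. subst X. exists zero. rewrite add_0_l in Hs. rewrite <- Hs. ring.
Qed.

Lemma dvd_le (c b : MA) : dvd c b -> zero ≺ b -> c ≼ b.
Proof.
  intros [s Hs] Hb. destruct (le_0 s) as [H|H].
  - rewrite <- Hs. apply le_mul_pos; auto.
  - subst. rewrite (ax_mul0 _ R) in Hb. exfalso; eapply lt_irrefl; eauto.
Qed.

Definition mu (d x : MA) := (x ⊕ one) ⊗ d ⊕ one.
Definition fact (d N : MA) := zero ≺ d /\ forall k, zero ≺ k -> k ≼ N -> dvd k d.

Lemma mu_gt1 (d x : MA) : zero ≺ d -> one ≺ mu d x.
Proof.
  intro H. unfold mu. assert (Hp : zero ≺ (x ⊕ one) ⊗ d) by (apply mul_pos; auto; apply lt_0_S).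
  pose proof (lt_S_mono _ _ Hp) as H'. rewrite add_0_l in H'. exact H'.
Qed.

Lemma not_dvd_1 (m : MA) : one ≺ m -> ~ dvd m one.
Proof.
  intros H [s Hs]. destruct (le_0 s) as [H1|H1].
  - assert (m ≼ m ⊗ s) by (apply le_mul_pos; auto). rewrite Hs in H0.
    eapply le_not_lt; eauto.
  - subst. rewrite (ax_mul0 _ R) in Hs. rewrite one_eq in Hs. symmetry in Hs. exact (succ_ne0 _ Hs).
Qed.

Lemma bezout (d N x x' c : MA) : fact d N -> x ≺ N -> x' ≺ N -> x <> x' ->
  dvd (mu d x) (c ⊗ mu d x') -> dvd (mu d x) c.
Proof.
  intros [Hd Hf] Hx Hx' Hne Hdv. destruct (trich x x') as [H|[H|H]]; [|contradiction|].
  - destruct (lt_ex _ _ H) as [k Hk].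
    assert (HK : k ⊕ one ≼ N).
    { apply lt_le. apply le_lt_trans with x'; auto. rewrite Hk. rewrite <- add_assoc. apply le_add_l. }
    destruct (Hf (k ⊕ one) (lt_0_S k) HK) as [e He].
    set (K := k ⊕ one) in *. set (a := x ⊕ one).
    assert (Hpos : zero ≺ a ⊗ d) by (apply mul_pos; auto; apply lt_0_S).
    destruct (lt_ex _ _ Hpos) as [t Ht]. rewrite add_0_l in Ht.
    assert (Hid : mu d x' ⊗ (a ⊗ a ⊗ e) = mu d x ⊗ (a ⊗ a ⊗ e ⊕ t) ⊕ one).
    { unfold mu. subst x'. fold K. fold a.
      assert (E1 : (a ⊗ d ⊕ one) ⊗ (a ⊗ a ⊗ e ⊕ t) ⊕ one =
                   (a ⊗ d) ⊗ (a ⊗ a ⊗ e) ⊕ a ⊗ a ⊗ e ⊕ (a ⊗ d) ⊗ t ⊕ (t ⊕ one)) by ring.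
      replace ((x ⊕ one) ⊗ d) with (a ⊗ d) by reflexivity.
      rewrite E1, <- Ht.
      replace ((a ⊗ d) ⊗ (a ⊗ a ⊗ e) ⊕ a ⊗ a ⊗ e ⊕ (a ⊗ d) ⊗ t ⊕ a ⊗ d) with
        ((a ⊗ d) ⊗ (a ⊗ a ⊗ e) ⊕ a ⊗ a ⊗ e ⊕ (a ⊗ d) ⊗ (t ⊕ one)) by ring.
      rewrite <- Ht. rewrite <- He. unfold a, K. ring. }
    apply (dvd_mul_r _ _ (a ⊗ a ⊗ e)) in Hdv.
    replace (c ⊗ mu d x' ⊗ (a ⊗ a ⊗ e)) with (c ⊗ (mu d x' ⊗ (a ⊗ a ⊗ e))) in Hdv by ring.
    rewrite Hid in Hdv.
    replace (c ⊗ (mu d x ⊗ (a ⊗ a ⊗ e ⊕ t) ⊕ one)) with (mu d x ⊗ (c ⊗ (a ⊗ a ⊗ e ⊕ t)) ⊕ c) in Hdv by ring.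
    eapply dvd_sub; eauto. apply dvd_self.
  - destruct (lt_ex _ _ H) as [k Hk].
    assert (HK : k ⊕ one ≼ N).
    { apply lt_le. apply le_lt_trans with x; auto. rewrite Hk. rewrite <- add_assoc. apply le_add_l. }
    destruct (Hf (k ⊕ one) (lt_0_S k) HK) as [e He].
    set (a := x ⊕ one). set (a' := x' ⊕ one).
    assert (Hid : mu d x' ⊗ (a ⊗ a ⊗ e) ⊕ one = mu d x ⊗ (a ⊗ a' ⊗ e ⊕ one)).
    { unfold mu, a, a'. subst x. rewrite <- He. ring. }
    apply (dvd_mul_r _ _ (a ⊗ a ⊗ e)) in Hdv.
    assert (H2 : dvd (mu d x) (c ⊗ mu d x' ⊗ (a ⊗ a ⊗ e) ⊕ c)).
    { replace (c ⊗ mu d x' ⊗ (a ⊗ a ⊗ e) ⊕ c) with (c ⊗ (mu d x' ⊗ (a ⊗ a ⊗ e) ⊕ one)) by ring.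
      rewrite Hid. replace (c ⊗ (mu d x ⊗ (a ⊗ a' ⊗ e ⊕ one))) with (mu d x ⊗ (c ⊗ (a ⊗ a' ⊗ e ⊕ one))) by ring.
      apply dvd_self. }
    eapply dvd_sub; eauto.
Qed.

Definition tS t := tadd t tone.
Definition tpm t1 t2 := tadd (tmul (tadd t1 t2) (tadd t1 t2)) t1.
Definition tmu td tx := tadd (tmul (tadd tx tone) td) tone.
Definition fLe t1 t2 := fOr (fLt t1 t2) (fEq t1 t2).
Definition fDvd s ta tc := fBEx s (tadd tc tone) (fEq (tmul ta (tvar s)) tc).
Definition fIff f g := fAnd (fImp f g) (fImp g f).
Definition v := tvar.

Ltac ind1 f l ls :=
  match goal with |- forall m, @?P m =>
    apply (IND1 f ltac:(apply S1_ex; apply S1_D0; reflexivity) (env l) (senv ls) P); [intro; reflexivity | | ] end.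

Lemma lt_1 (k : MA) : k ≺ one -> k = zero.
Proof. rewrite one_eq. intro H. apply lt_S_iff in H. destruct H as [H|H]; auto. exfalso; eapply lt_0; eauto. Qed.

Lemma fact_ex (N : MA) : exists d, fact d N.
Proof.
  cut (forall N : MA, exists d, zero ≺ d /\ forall k, k ≺ N ⊕ one -> zero ≺ k -> dvdb k d).
  { intros H. destruct (H N) as [d [H1 H2]]. exists d. split; auto. intros k Hk HkN.
    apply dvd_dvdb, H2; auto. apply lt_S_iff; auto. }
  ind1 (fEx 1 (fAnd (fLt tzero (v 1)) (fBAll 2 (tS (v 0)) (fImp (fLt tzero (v 2)) (fDvd 3 (v 2) (v 1)))))) (@nil MA) (@nil (S A)).
  - exists one. split. apply lt_0_1. intros k Hk Hk0. rewrite add_0_l in Hk. apply lt_1 in Hk. subst.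
    exfalso; eapply lt_irrefl; eauto.
  - intros m [d [Hd H]]. exists (d ⊗ (m ⊕ one)). split. apply mul_pos; auto. apply lt_0_S.
    intros k Hk Hk0. apply dvd_dvdb. apply lt_S_iff in Hk. destruct Hk as [Hk|Hk].
    + apply dvd_mul_r, dvd_dvdb, H; auto.
    + subst. apply dvd_self'.
Qed.

Lemma beta_ex (d N : MA) : zero ≺ d -> exists β, zero ≺ β /\ forall x, x ≺ N -> dvd (mu d x) β.
Proof.
  intro Hd.
  cut (forall N : MA, exists β, zero ≺ β /\ forall x, x ≺ N -> dvdb (mu d x) β).
  { intros H. destruct (H N) as [β [H1 H2]]. exists β. split; auto. intros x Hx. apply dvd_dvdb; auto. }
  ind1 (fEx 2 (fAnd (fLt tzero (v 2)) (fBAll 3 (v 0) (fDvd 4 (tmu (v 1) (v 3)) (v 2))))) [zero; d] (@nil (S A)).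
  - exists one. split. apply lt_0_1. intros x Hx. exfalso; eapply lt_0; eauto.
  - intros m [β [Hb H]]. exists (β ⊗ mu d m). split.
    + apply mul_pos; auto. apply lt_le_trans with one. apply lt_0_1. apply lt_le, mu_gt1; auto.
    + intros x Hx. apply dvd_dvdb. apply lt_S_iff in Hx. destruct Hx as [Hx|Hx].
      * apply dvd_mul_r, dvd_dvdb, H; auto.
      * subst. apply dvd_self'.
Qed.

Definition ok (d β N : MA) := fact d N /\ zero ≺ β /\ forall x, x ≺ N -> dvd (mu d x) β.

Lemma ok_ex (N : MA) : exists d β, ok d β N.
Proof.
  destruct (fact_ex N) as [d Hd]. destruct (beta_ex d N (proj1 Hd)) as [β [H1 H2]].
  exists d, β. split; auto.
Qed.

Lemma ok_mono (d β N N' : MA) : ok d β N -> N' ≼ N -> ok d β N'.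
Proof.
  intros [[Hd Hf] [Hb Hm]] H. split; [split|split]; auto.
  - intros k Hk Hk'. apply Hf; auto. eapply le_trans; eauto.
  - intros x Hx. apply Hm. eapply lt_le_trans; eauto.
Qed.

Lemma dvd_div_le (c β s : MA) : c ⊗ s = β -> zero ≺ β -> s ≺ β ⊕ one.
Proof.
  intros H Hb. apply lt_S_iff. apply dvd_le; auto. exists c. rewrite <- H. ring.
Qed.

Lemma code_lemma (d β N : MA) (X : S A) : ok d β N ->
  exists c, dvd c β /\ forall x, x ≺ N -> (dvd (mu d x) c <-> mem x X).
Proof.
  intros Hok. destruct Hok as [[Hd Hf] [Hb Hm]].
  cut (forall y : MA, exists c, dvdb c β /\
        (forall x, x ≺ y -> x ≺ N -> (dvdb (mu d x) c -> mem x X) /\ (mem x X -> dvdb (mu d x) c)) /\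
        (forall x, x ≺ N -> y ≼ x -> forall s, s ≺ β ⊕ one -> dvdb (mu d x) (c ⊗ s) -> dvdb (mu d x) s)).
  { intros H. destruct (H N) as [c [H1 [H2 _]]]. exists c. split. apply dvd_dvdb; auto.
    intros x Hx. rewrite dvd_dvdb. split; apply H2; auto. }
  ind1 (fEx 4 (fAnd (fDvd 5 (v 4) (v 2)) (fAnd
         (fBAll 5 (v 0) (fImp (fLt (v 5) (v 3)) (fIff (fDvd 6 (tmu (v 1) (v 5)) (v 4)) (fMem (v 5) 0))))
         (fBAll 5 (v 3) (fImp (fLe (v 0) (v 5)) (fBAll 6 (tS (v 2))
             (fImp (fDvd 7 (tmu (v 1) (v 5)) (tmul (v 4) (v 6))) (fDvd 7 (tmu (v 1) (v 5)) (v 6))))))))) [zero; d; β; N] [X].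
  - exists one. split; [|split].
    + apply dvd_dvdb. exists β. ring.
    + intros x Hx. exfalso; eapply lt_0; eauto.
    + intros x _ _ s _ H. rewrite mul_1_l in H. exact H.
  - intros m [c [Hc [Hmem Hinv]]].
    destruct (classic (m ≺ N /\ mem m X)) as [[HmN HmX]|Hno].
    + exists (c ⊗ mu d m). split; [|split].
      * apply dvd_dvdb in Hc. destruct Hc as [s Hs]. apply dvd_dvdb.
        assert (Hs' : s ≺ β ⊕ one) by (apply (dvd_div_le c); auto).
        assert (Hms : dvdb (mu d m) (c ⊗ s)) by (apply dvd_dvdb; rewrite Hs; apply Hm; auto).
        specialize (Hinv m HmN (le_refl _) s Hs' Hms). apply dvd_dvdb in Hinv.
        destruct Hinv as [t Ht]. exists t. rewrite <- Hs, <- Ht. ring.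
      * intros x Hx HxN. apply lt_S_iff in Hx. destruct Hx as [Hx|Hx].
        -- destruct (Hmem x Hx HxN) as [H1 H2]. split.
           ++ intro H. apply H1. apply dvd_dvdb. apply dvd_dvdb in H.
              apply (bezout d N x m c); [split; auto | auto | auto | intro; subst; eapply lt_irrefl; eauto | exact H].
           ++ intro H. apply dvd_dvdb, dvd_mul_r, dvd_dvdb, H2, H.
        -- subst. split; auto. intros _. apply dvd_dvdb, dvd_self'.
      * intros x HxN Hle s Hs H. apply dvd_dvdb in H.
        assert (Hne : x <> m) by (intro; subst; eapply lt_not_le; [apply lt_S|exact Hle]).
        replace (c ⊗ mu d m ⊗ s) with ((c ⊗ s) ⊗ mu d m) in H by ring.
        apply (bezout d N x m (c ⊗ s)) in H; [|split; auto|auto|auto|auto].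
        apply (Hinv x HxN); auto. { apply le_trans with (m ⊕ one); auto. apply lt_le, lt_S. }
        apply dvd_dvdb; auto.
    + exists c. split; [exact Hc|split].
      * intros x Hx HxN. apply lt_S_iff in Hx. destruct Hx as [Hx|Hx]; [apply Hmem; auto|].
        subst x. split.
        -- intro H. exfalso. apply (not_dvd_1 (mu d m)). apply mu_gt1; auto.
           apply dvd_dvdb. apply (Hinv m HxN (le_refl _) one).
           apply lt_S_iff. apply lt_S_le in Hb. rewrite add_0_l in Hb. exact Hb.
           replace (c ⊗ one) with c by ring. exact H.
        -- intro H. exfalso. apply Hno; auto.
      * intros x HxN Hle s Hs H. apply (Hinv x HxN); auto. apply le_trans with (m ⊕ one); auto. apply lt_le, lt_S.
Qed.


Lemma comp0 (f : form) (Hf : isDelta0 f = true) (e : nat -> MA) (es : nat -> S A) :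
  exists X : S A, forall m, mem m X <-> sat A (upd e 0 m) es f.
Proof.
  apply (ax_Delta01_CA _ R f f (S1_D0 _ Hf) (P1_D0 _ Hf) 0 e es). tauto.
Qed.

Lemma le_S_lt (a b : MA) : a ≼ b -> a ≺ b ⊕ one.
Proof. intro H. apply lt_S_iff; auto. Qed.

Lemma pm_inj1 (a b a' b' : MA) : pairM a b = pairM a' b' -> a = a'.
Proof. intro H. apply pm_inj in H. tauto. Qed.
Lemma pm_inj2 (a b a' b' : MA) : pairM a b = pairM a' b' -> b = b'.
Proof. intro H. apply pm_inj in H. tauto. Qed.

Section BW.
Variable b : MA.
Variables Q V E : S A.
Variable q : MA.
Hypothesis HQ : forall x, mem x Q -> x ≺ b.
Hypothesis HV : forall v, mem v V -> exists q' i, mem q' Q /\ v = pairM q' i.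
Hypothesis HE : forall u, mem u E -> exists q1 i q2, mem q1 Q /\ mem q2 Q /\
        u = pairM (pairM q1 i) (pairM q2 (add i one)) /\
        mem (pairM q1 i) V /\ mem (pairM q2 (add i one)) V.
Hypothesis Hfin : forall n : MA, exists P : S A, finPath V E q n P.

Definition edge (x i y : MA) := mem (pairM (pairM x i) (pairM y (i ⊕ one))) E.

Definition Path (P : S A) (n : MA) :=
  mem (pairM q zero) P /\
  (forall i, i ≼ n -> exists x, mem (pairM x i) P /\ forall x', mem (pairM x' i) P -> x' = x) /\
  (forall i x1 x2, i ≺ n -> mem (pairM x1 i) P -> mem (pairM x2 (i ⊕ one)) P -> edge x1 i x2) /\
  (forall i x, i ≼ n -> mem (pairM x i) P -> mem (pairM x i) V).

Definition alive (n x j : MA) := j ≼ n /\ exists P, Path P n /\ mem (pairM x j) P.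

Lemma V_lt (x i : MA) : mem (pairM x i) V -> x ≺ b.
Proof.
  intro H. destruct (HV _ H) as [q' [i' [Hq Heq]]]. apply pm_inj1 in Heq. subst. auto.
Qed.

Lemma edge_V (x i y : MA) : edge x i y -> mem (pairM x i) V /\ mem (pairM y (i ⊕ one)) V.
Proof.
  intro H. destruct (HE _ H) as [q1 [i1 [q2 [_ [_ [Heq [H1 H2]]]]]]].
  pose proof (pm_inj1 _ _ _ _ Heq) as E1. pose proof (pm_inj2 _ _ _ _ Heq) as E2.
  apply pm_inj in E1. apply pm_inj in E2. destruct E1, E2. subst. auto.
Qed.

Lemma finPath_Path (n : MA) (P : S A) : finPath V E q n P -> Path P n.
Proof.
  intros [H1 [H2 [H3 H4]]]. split; [|split; [|split]]; auto.
  intros i x _ H. apply H1; auto.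
Qed.

Lemma q_lt_b : q ≺ b.
Proof.
  destruct (Hfin zero) as [P HP]. apply finPath_Path in HP. destruct HP as [H1 [_ [_ H4]]].
  apply (V_lt q zero). apply H4; auto. apply le_refl.
Qed.

Lemma Path_uniq (P : S A) (n i x x' : MA) : Path P n -> i ≼ n -> mem (pairM x i) P -> mem (pairM x' i) P -> x = x'.
Proof.
  intros [_ [H _]] Hi H1 H2. destruct (H i Hi) as [y [_ Hy]]. rewrite (Hy x H1), (Hy x' H2). reflexivity.
Qed.

Lemma Path_lt_b (P : S A) (n i x : MA) : Path P n -> i ≼ n -> mem (pairM x i) P -> x ≺ b.
Proof. intros [_ [_ [_ H]]] Hi Hx. eapply V_lt. apply H; eauto. Qed.

Lemma Path_mono (P : S A) (n n' : MA) : Path P n' -> n ≼ n' -> Path P n.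
Proof.
  intros [H1 [H2 [H3 H4]]] Hn. split; [|split; [|split]]; auto.
  - intros i Hi. apply H2. eapply le_trans; eauto.
  - intros i x1 x2 Hi. apply H3. eapply lt_le_trans; eauto.
  - intros i x Hi. apply H4. eapply le_trans; eauto.
Qed.

Lemma alive_trunc (n n' x j : MA) : alive n' x j -> j ≼ n -> n ≼ n' -> alive n x j.
Proof.
  intros [_ [P [HP Hx]]] Hj Hn. split; auto. exists P. split; auto. eapply Path_mono; eauto.
Qed.

Lemma alive_lt_b (n x j : MA) : alive n x j -> x ≺ b.
Proof. intros [Hj [P [HP Hx]]]. eapply Path_lt_b; eauto. Qed.

Lemma alive_q (n : MA) : alive n q zero.
Proof.
  destruct (Hfin n) as [P HP]. apply finPath_Path in HP. split. apply le_0.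
  exists P. split; auto. apply HP.
Qed.

Lemma alive_next (n x j : MA) : alive n x j -> j ≺ n -> exists y, edge x j y /\ alive n y (j ⊕ one).
Proof.
  intros [Hj [P [HP Hx]]] Hjn. pose proof HP as [H1 [H2 [H3 H4]]].
  destruct (H2 (j ⊕ one)) as [y [Hy _]]. { apply lt_S_le; auto. }
  exists y. split. apply H3; auto. split. apply lt_S_le; auto. exists P; auto.
Qed.

Lemma splice (P1 P2 : S A) (N n g w : MA) : Path P1 N -> Path P2 n -> g ≼ N -> g ≼ n ->
  mem (pairM w g) P1 -> mem (pairM w g) P2 ->
  exists P3, Path P3 n /\ forall x i, i ≼ g -> mem (pairM x i) P1 -> mem (pairM x i) P3.
Proof.
  intros HP1 HP2 HgN Hgn Hw1 Hw2.
  destruct (comp0 (fBEx 7 (tS (v 0)) (fBEx 8 (tS (v 0)) (fAnd (fEq (v 0) (tpm (v 7) (v 8)))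
      (fOr (fAnd (fLe (v 8) (v 6)) (fMem (v 0) 3)) (fAnd (fLt (v 6) (v 8)) (fMem (v 0) 4))))))
      eq_refl (env [zero; b; q; zero; zero; zero; g]) (senv [V; E; s0; P1; P2])) as [P3 HP3].
  assert (Hm : forall x i, mem (pairM x i) P3 <-> (i ≼ g /\ mem (pairM x i) P1) \/ (g ≺ i /\ mem (pairM x i) P2)).
  { intros x i. rewrite HP3. cbn. split.
    - intros [x' [_ [i' [_ [Heq H]]]]]. apply pm_inj in Heq. destruct Heq; subst. exact H.
    - intros H. exists x. split. apply le_S_lt, le_pm_l. exists i. split. apply le_S_lt, le_pm_r.
      split; auto. }
  exists P3. split.
  - pose proof HP1 as [A1 [B1 [C1 D1]]]. pose proof HP2 as [A2 [B2 [C2 D2]]].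
    split; [|split; [|split]].
    + apply Hm. left. split; auto. apply le_0.
    + intros i Hi. destruct (trich g i) as [H|[H|H]].
      * destruct (B2 i Hi) as [x [Hx Hu]]. exists x. split. apply Hm; right; auto.
        intros x' Hx'. apply Hm in Hx'. destruct Hx' as [[Hc _]|[_ Hc]]; auto. exfalso; eapply le_not_lt; eauto.
      * subst i. destruct (B1 g HgN) as [x [Hx Hu]]. exists x. split. apply Hm; left; split; auto. apply le_refl.
        intros x' Hx'. apply Hm in Hx'. destruct Hx' as [[_ Hc]|[Hc _]]; auto. exfalso; eapply lt_irrefl; eauto.
      * assert (Hig : i ≼ g) by (left; auto).
        destruct (B1 i (le_trans _ _ _ Hig HgN)) as [x [Hx Hu]]. exists x. split. apply Hm; left; auto.
        intros x' Hx'. apply Hm in Hx'. destruct Hx' as [[_ Hc]|[Hc _]]; auto. exfalso; eapply lt_asym; eauto.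
    + intros i x1 x2 Hi H1 H2. apply Hm in H1. apply Hm in H2.
      destruct (trich i g) as [H|[H|H]].
      * assert (Hi1 : i ⊕ one ≼ g) by (apply lt_S_le; auto).
        destruct H1 as [[_ H1]|[Hc _]]; [|exfalso; eapply lt_asym; eauto].
        destruct H2 as [[_ H2]|[Hc _]]; [|exfalso; eapply le_not_lt; eauto].
        apply C1; auto. eapply lt_le_trans; eauto.
      * subst i. destruct H1 as [[_ H1]|[Hc _]]; [|exfalso; eapply lt_irrefl; eauto].
        destruct H2 as [[Hc _]|[_ H2]]; [exfalso; eapply lt_not_le; [apply lt_S|exact Hc]|].
        assert (x1 = w) by (eapply Path_uniq; [exact HP1|exact HgN|exact H1|exact Hw1]). subst x1.
        apply C2; auto.
      * destruct H1 as [[Hc _]|[_ H1]]; [exfalso; eapply le_not_lt; eauto|].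
        destruct H2 as [[Hc _]|[_ H2]].
        { exfalso. apply (le_not_lt _ _ Hc). eapply lt_trans; eauto. apply lt_S. }
        apply C2; auto.
    + intros i x Hi Hx. apply Hm in Hx. destruct Hx as [[Hig Hx]|[_ Hx]].
      * apply D1; auto. eapply le_trans; eauto.
      * apply D2; auto.
  - intros x i Hi Hx. apply Hm. left; auto.
Qed.


Definition PathC (d c n : MA) :=
  dvdb (mu d (pairM q zero)) c /\
  (forall i, i ≺ n ⊕ one -> exists x, x ≺ b /\ (dvdb (mu d (pairM x i)) c /\
        forall x', x' ≺ b -> dvdb (mu d (pairM x' i)) c -> x' = x)) /\
  ((forall i, i ≺ n -> forall x, x ≺ b -> forall x2, x2 ≺ b ->
        dvdb (mu d (pairM x i)) c /\ dvdb (mu d (pairM x2 (i ⊕ one))) c -> edge x i x2) /\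
   (forall i, i ≺ n ⊕ one -> forall x, x ≺ b -> dvdb (mu d (pairM x i)) c -> mem (pairM x i) V)).

Definition fEdge tx ti ty := fMem (tpm (tpm tx ti) (tpm ty (tS ti))) 1.
Definition fV tx ti := fMem (tpm tx ti) 0.

Definition fPathC (vd vc vn bb : nat) : form :=
  let i := bb in let x := Nat.succ bb in let x' := Nat.succ x in let s := Nat.succ x' in let x2 := Nat.succ s in
  fAnd (fDvd s (tmu (v vd) (tpm (v 2) tzero)) (v vc))
  (fAnd (fBAll i (tS (v vn)) (fBEx x (v 1) (fAnd (fDvd s (tmu (v vd) (tpm (v x) (v i))) (v vc))
          (fBAll x' (v 1) (fImp (fDvd s (tmu (v vd) (tpm (v x') (v i))) (v vc)) (fEq (v x') (v x)))))))
  (fAnd (fBAll i (v vn) (fBAll x (v 1) (fBAll x2 (v 1) (fImp (fAnd (fDvd s (tmu (v vd) (tpm (v x) (v i))) (v vc))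
          (fDvd s (tmu (v vd) (tpm (v x2) (tS (v i)))) (v vc))) (fEdge (v x) (v i) (v x2))))))
  (fBAll i (tS (v vn)) (fBAll x (v 1) (fImp (fDvd s (tmu (v vd) (tpm (v x) (v i))) (v vc)) (fV (v x) (v i))))))).

Definition aliveC (d β n x j : MA) :=
  j ≼ n /\ exists c, c ≺ β ⊕ one /\ (PathC d c n /\ dvdb (mu d (pairM x j)) c).

Definition fAliveC (vd vb vn : nat) (tx tj : term) (bb : nat) : form :=
  fAnd (fLe tj (v vn)) (fBEx bb (tS (v vb)) (fAnd (fPathC vd bb vn (Nat.succ bb))
       (fDvd (Nat.succ bb) (tmu (v vd) (tpm tx tj)) (v bb)))).

Lemma decode (d c n : MA) : PathC d c n -> exists P, Path P n /\
  (forall x i, mem (pairM x i) P <-> x ≺ b /\ i ≼ n /\ dvdb (mu d (pairM x i)) c) /\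
  (forall u, mem u P -> exists x i, u = pairM x i /\ i ≼ n).
Proof.
  intro HC.
  destruct (comp0 (fBEx 7 (v 1) (fBEx 8 (tS (v 6)) (fAnd (fEq (v 0) (tpm (v 7) (v 8)))
             (fDvd 9 (tmu (v 10) (v 0)) (v 11))))) eq_refl
          (env [zero; b; q; zero; zero; zero; n; zero; zero; zero; d; c]) (senv [V; E])) as [P HP].
  assert (Hm : forall x i, mem (pairM x i) P <-> x ≺ b /\ i ≼ n /\ dvdb (mu d (pairM x i)) c).
  { intros x i. rewrite HP. cbn. split.
    - intros [x' [Hx' [i' [Hi' [Heq H]]]]]. apply pm_inj in Heq. destruct Heq; subst.
      split; auto. split; auto. apply lt_S_iff; auto.
    - intros [H1 [H2 H3]]. exists x. split; auto. exists i. split. apply le_S_lt; auto. split; auto. }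
  exists P. split; [|split; auto].
  - destruct HC as [C1 [C2 [C3 C4]]]. split; [|split; [|split]].
    + apply Hm. split. apply q_lt_b. split; auto. apply le_0.
    + intros i Hi. destruct (C2 i (le_S_lt _ _ Hi)) as [x [Hx [Hd Hu]]]. exists x. split.
      apply Hm; auto. intros x' Hx'. apply Hm in Hx'. destruct Hx' as [H1 [_ H3]]. apply Hu; auto.
    + intros i x1 x2 Hi H1 H2. apply Hm in H1. apply Hm in H2. destruct H1 as [H1 [_ H1']]. destruct H2 as [H2 [_ H2']].
      apply C3; auto.
    + intros i x Hi Hx. apply Hm in Hx. destruct Hx as [H1 [_ H3]]. apply C4; auto. apply le_S_lt; auto.
  - intros u Hu. pose proof Hu as Hu'. apply HP in Hu'. cbn in Hu'.
    destruct Hu' as [x [_ [i [Hi [Heq _]]]]]. exists x, i. split; auto. apply lt_S_iff; auto.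
Qed.

Lemma encode (d β S' n : MA) (P : S A) : ok d β (pairM b S') -> n ≼ S' -> Path P n ->
  exists c, c ≺ β ⊕ one /\ PathC d c n /\
    forall x i, x ≺ b -> i ≼ n -> (dvdb (mu d (pairM x i)) c <-> mem (pairM x i) P).
Proof.
  intros Hok HnS HP. destruct (code_lemma d β (pairM b S') P Hok) as [c [Hcb Hc]].
  assert (Hm : forall x i, x ≺ b -> i ≼ n -> (dvdb (mu d (pairM x i)) c <-> mem (pairM x i) P)).
  { intros x i Hx Hi. rewrite <- dvd_dvdb. apply Hc. apply pm_lt; auto. eapply le_trans; eauto. }
  exists c. split; [|split; auto].
  - apply le_S_lt. apply dvd_le; auto. apply Hok.
  - pose proof HP as [A1 [B1 [C1 D1]]]. split; [|split; [|split]].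
    + apply Hm; auto. apply q_lt_b. apply le_0.
    + intros i Hi. apply lt_S_iff in Hi. destruct (B1 i Hi) as [x [Hx Hu]].
      assert (Hxb : x ≺ b) by (eapply Path_lt_b; eauto).
      exists x. split; auto. split. apply Hm; auto.
      intros x' Hx' Hd. apply Hu. apply Hm; auto.
    + intros i Hi x Hx x2 Hx2 [H1 H2]. apply C1; auto.
      * apply Hm; auto. left; auto.
      * apply Hm; auto. apply lt_S_le; auto.
    + intros i Hi x Hx Hd. apply lt_S_iff in Hi. apply D1; auto. apply Hm; auto.
Qed.

Lemma alive_C (d β n x j S' : MA) : ok d β (pairM b S') -> n ≼ S' -> x ≺ b ->
  (alive n x j <-> aliveC d β n x j).
Proof.
  intros Hok HnS Hx. split.
  - intros [Hj [P [HP HxP]]]. destruct (encode d β S' n P Hok HnS HP) as [c [Hc [HC Hm]]].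
    split; auto. exists c. split; auto. split; auto. apply Hm; auto.
  - intros [Hj [c [_ [HC Hd]]]]. destruct (decode d c n HC) as [P [HP [Hm _]]].
    split; auto. exists P. split; auto. apply Hm. auto.
Qed.


Variable HS2 : Sigma02_IND A.

Lemma IND2 (f : form) (Hf : isSigma2 f) (e : nat -> MA) (es : nat -> S A)
  (P : MA -> Prop) :
  (forall m, sat A (upd e 0 m) es f <-> P m) -> P zero ->
  (forall m, P m -> P (m ⊕ one)) -> forall m, P m.
Proof.
  intros H H0 HS m. apply H.
  apply (HS2 f Hf 0 e es).
  - apply H, H0.
  - intros k Hk. apply H, HS, H, Hk.
Qed.

Lemma LNP (G : MA -> Prop) (f : form) (Hf : isPi1 f) (e : nat -> MA) (es : nat -> S A) :
  (forall y, sat A (upd e 0 y) es f <-> forall n, n ≺ y -> ~ G n) ->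
  (exists n, G n) -> exists n, G n /\ forall n', n' ≺ n -> ~ G n'.
Proof.
  intros Hs [n0 Hn0]. apply NNPP. intro Hno.
  assert (H : forall y : MA, forall n, n ≺ y -> ~ G n).
  { apply (IND2 f (S2_P1 _ Hf) e es _ Hs).
    - intros n Hn. exfalso; eapply lt_0; eauto.
    - intros y IH n Hn Gn. apply lt_S_iff in Hn. destruct Hn as [Hn|Hn].
      + eapply IH; eauto.
      + subst n. apply Hno. exists y. split; auto. }
  eapply H; [apply lt_S|exact Hn0].
Qed.

Variable db : MA.
Hypothesis Hdb : fact db b.

Definition small (n j m : MA) := exists c, zero ≺ c /\ c ≼ m /\
   forall x, x ≺ b -> alive n x j -> dvd (mu db x) c.
Definition Phi (m : MA) := forall k, exists j n, k ≼ j /\ j ≼ n /\ small n j m.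

Definition okC (d β N : MA) := (zero ≺ d /\ forall k, k ≺ N ⊕ one -> zero ≺ k -> dvdb k d) /\
   (zero ≺ β /\ forall x, x ≺ N -> dvdb (mu d x) β).
Definition fOk (vd vb : nat) (tN : term) (bb : nat) : form :=
  fAnd (fAnd (fLt tzero (v vd)) (fBAll bb (tS tN) (fImp (fLt tzero (v bb)) (fDvd (Nat.succ bb) (v bb) (v vd)))))
       (fAnd (fLt tzero (v vb)) (fBAll bb tN (fDvd (Nat.succ bb) (tmu (v vd) (v bb)) (v vb)))).

Lemma okC_iff (d β N : MA) : okC d β N <-> ok d β N.
Proof.
  split.
  - intros [[H1 H2] [H3 H4]]. split; [split|split]; auto.
    + intros k Hk HkN. apply dvd_dvdb, H2; auto. apply le_S_lt; auto.
    + intros x Hx. apply dvd_dvdb; auto.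
  - intros [[H1 H2] [H3 H4]]. split; split; auto.
    + intros k Hk Hk0. apply dvd_dvdb, H2; auto. apply lt_S_iff; auto.
    + intros x Hx. apply dvd_dvdb; auto.
Qed.

Definition smallC (d β n j m : MA) := exists c, c ≺ m ⊕ one /\ (zero ≺ c /\
   forall x, x ≺ b -> aliveC d β n x j -> dvdb (mu db x) c).
Definition fSmallC (vd vb vn vj : nat) (tm : term) (bb : nat) : form :=
  fBEx bb (tS tm) (fAnd (fLt tzero (v bb)) (fBAll (bb+1) (v 1)
     (fImp (fAliveC vd vb vn (v (bb+1)) (v vj) (bb+2)) (fDvd (bb+2) (tmu (v 3) (v (bb+1))) (v bb))))).

Lemma smallC_iff (d β n j m S' : MA) : ok d β (pairM b S') -> n ≼ S' ->
  (smallC d β n j m <-> small n j m).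
Proof.
  intros Hok HnS. split.
  - intros [c [Hc [Hc0 H]]]. exists c. split; auto. split. apply lt_S_iff; auto.
    intros x Hx Ha. apply dvd_dvdb, H; auto. apply (alive_C d β n x j S'); auto.
  - intros [c [Hc0 [Hc H]]]. exists c. split. apply le_S_lt; auto. split; auto.
    intros x Hx Ha. apply dvd_dvdb, H; auto. apply (alive_C d β n x j S'); auto.
Qed.

Definition NPm (m : MA) := exists k, forall j n d β,
  k ≼ j /\ (j ≼ n /\ okC d β (pairM b n)) -> ~ smallC d β n j m.
Definition fNP : form :=
  fEx 6 (fAll 7 (fAll 8 (fAll 9 (fAll 10 (fImp (fAnd (fLe (v 6) (v 7)) (fAnd (fLe (v 7) (v 8))
     (fOk 9 10 (tpm (v 1) (v 8)) 11))) (fNot (fSmallC 9 10 8 7 (v 0) 11))))))).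

Lemma NPm_iff (m : MA) : NPm m <-> ~ Phi m.
Proof.
  split.
  - intros [k Hk] HP. destruct (HP k) as [j [n [H1 [H2 H3]]]].
    destruct (ok_ex (pairM b n)) as [d [β Hok]]. apply (Hk j n d β).
    + split; auto. split; auto. apply okC_iff; auto.
    + apply (smallC_iff d β n j m n); auto. apply le_refl.
  - intros HP. apply not_all_ex_not in HP. destruct HP as [k Hk]. exists k.
    intros j n d β [H1 [H2 H3]] Hs. apply Hk. exists j, n. split; auto. split; auto.
    apply okC_iff in H3. apply (smallC_iff d β n j m n); auto. apply le_refl.
Qed.

Lemma Phi_0 : ~ Phi zero.
Proof.
  intro H. destruct (H zero) as [j [n [_ [_ [c [Hc [Hc0 _]]]]]]]. eapply le_not_lt; eauto.
Qed.

Lemma Phi_big : exists M0, Phi M0.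
Proof.
  destruct (beta_ex db b (proj1 Hdb)) as [M0 [HM0 HM]]. exists M0. intros k.
  exists k, k. split. apply le_refl. split. apply le_refl.
  exists M0. split; auto. split. apply le_refl. intros x Hx _. apply HM; auto.
Qed.

Lemma exists_m0 : exists m0, ~ Phi m0 /\ Phi (m0 ⊕ one).
Proof.
  apply NNPP. intro Hno.
  assert (H : forall m, NPm m).
  { apply (IND2 fNP ltac:(apply S2_ex; apply S2_P1; repeat apply P1_all; apply P1_D0; reflexivity)
          (env [zero; b; q; db]) (senv [V; E]) NPm).
    - intro m. reflexivity.
    - apply NPm_iff, Phi_0.
    - intros m Hm. apply NPm_iff. intro HP. apply Hno. exists m. split; auto. apply NPm_iff; auto. }
  destruct Phi_big as [M0 HM0]. apply (NPm_iff M0); auto.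
Qed.


Section Fixed.
Variables m0 k0 : MA.
Hypothesis Hk0 : forall j n, k0 ≼ j -> j ≼ n -> ~ small n j m0.
Hypothesis HPhi : Phi (m0 ⊕ one).

Definition Good (j n : MA) := k0 ≼ j /\ j ≼ n /\ small n j (m0 ⊕ one).

Lemma removal (n n' j x0 : MA) : small n j (m0 ⊕ one) ->
  (forall x, x ≺ b -> alive n' x j -> alive n x j) -> x0 ≺ b -> alive n x0 j -> ~ alive n' x0 j ->
  small n' j m0.
Proof.
  intros [c [Hc0 [Hcm H]]] Hsub Hx0 Ha Hna.
  destruct (H x0 Hx0 Ha) as [c' Hc'].
  assert (Hc'0 : zero ≺ c').
  { destruct (le_0 c') as [Hl|Hl]; auto. subst c'. rewrite (ax_mul0 _ R) in Hc'. subst c.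
    exfalso; eapply lt_irrefl; eauto. }
  exists c'. split; auto. split.
  - assert (Hlt : c' ≺ c).
    { rewrite <- Hc'. pose proof (lt_mul_r one (mu db x0) c' (mu_gt1 _ _ (proj1 Hdb)) Hc'0) as Hl.
      rewrite mul_1_l in Hl. exact Hl. }
    apply lt_S_iff. eapply lt_le_trans; [exact Hlt|]. exact Hcm.
  - intros x Hx Hax. assert (Hne : x <> x0) by (intro; subst; contradiction).
    specialize (H x Hx (Hsub x Hx Hax)). rewrite <- Hc', mul_comm in H.
    eapply (bezout db b x x0 c'); eauto.
Qed.

Lemma stable (j n n' x : MA) : Good j n -> n ≼ n' -> x ≺ b -> (alive n' x j <-> alive n x j).
Proof.
  intros [Hk [Hjn Hs]] Hnn Hx. split.
  - intro H. eapply alive_trunc; eauto.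
  - intro H. apply NNPP. intro Hna. apply (Hk0 j n'); auto. eapply le_trans; eauto.
    apply (removal n n' j x); auto. intros y Hy Hay. eapply alive_trunc; eauto.
Qed.

Definition ext (x j : MA) := forall n, j ≼ n -> alive n x j.

Lemma Good_ext (j n w : MA) : Good j n -> alive n w j -> ext w j.
Proof.
  intros HG Ha n' Hn'. destruct (trich n' n) as [H|[H|H]].
  - eapply alive_trunc; eauto. left; auto.
  - subst; auto.
  - apply (stable j n n' w); auto. left; auto. eapply alive_lt_b; eauto.
Qed.

Lemma ext_via (j N i y : MA) : Good j N -> i ≼ j -> alive N y i -> ext y i.
Proof.
  intros HG Hij Ha n Hin. destruct (trich n N) as [H|[H|H]].
  - eapply alive_trunc; eauto. left; auto.
  - subst; auto.
  - pose proof HG as [_ [HjN _]]. destruct Ha as [HiN [P1 [HP1 Hy]]].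
    destruct (proj1 (proj2 HP1) j HjN) as [w [Hw _]].
    assert (Hew : ext w j) by (apply (Good_ext j N); auto; split; auto; exists P1; auto).
    assert (Hjn : j ≼ n) by (left; eapply le_lt_trans; eauto).
    destruct (Hew n Hjn) as [_ [P2 [HP2 Hw2]]].
    destruct (splice P1 P2 N n j w HP1 HP2 HjN Hjn Hw Hw2) as [P3 [HP3 Hsub]].
    split; auto. exists P3. split; auto.
Qed.

Lemma InfGood (k : MA) : exists j n, k ≼ j /\ Good j n.
Proof.
  destruct (trich k k0) as [H|[H|H]].
  - destruct (HPhi k0) as [j [n [H1 [H2 H3]]]]. exists j, n. split. left; eapply lt_le_trans; eauto.
    split; auto.
  - rewrite H. destruct (HPhi k0) as [j [n [H1 [H2 H3]]]]. exists j, n. split; auto. split; auto.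
  - destruct (HPhi k) as [j [n [H1 [H2 H3]]]]. exists j, n. split; auto. split; auto.
    left; eapply lt_le_trans; eauto.
Qed.

Definition GoodAfter (i n : MA) := exists j, i ≺ j /\ Good j n.
Definition NN (i n : MA) := GoodAfter i n /\ forall n', n' ≺ n -> ~ GoodAfter i n'.

Definition GAC (d β i n : MA) := exists j, j ≺ n ⊕ one /\ (i ≺ j /\ (k0 ≼ j /\ smallC d β n j (m0 ⊕ one))).
Definition fGAC (vd vb vi vn bb : nat) : form :=
  fBEx bb (tS (v vn)) (fAnd (fLt (v vi) (v bb)) (fAnd (fLe (v 5) (v bb)) (fSmallC vd vb vn bb (tS (v 4)) (bb+1)))).

Lemma GAC_iff (d β i n S' : MA) : ok d β (pairM b S') -> n ≼ S' -> (GAC d β i n <-> GoodAfter i n).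
Proof.
  intros Hok HnS. split.
  - intros [j [Hj [Hij [Hk Hs]]]]. exists j. split; auto. split; auto. split. apply lt_S_iff; auto.
    apply (smallC_iff d β n j _ S'); auto.
  - intros [j [Hij [Hk [Hjn Hs]]]]. exists j. split. apply le_S_lt; auto. split; auto. split; auto.
    apply (smallC_iff d β n j _ S'); auto.
Qed.

Lemma NN_ex (i : MA) : exists n, NN i n.
Proof.
  assert (Hex : exists n, GoodAfter i n).
  { destruct (InfGood (i ⊕ one)) as [j [n [H1 H2]]]. exists n, j. split; auto. apply lt_S_le; auto. }
  apply (LNP (GoodAfter i) (fAll 7 (fAll 8 (fBAll 9 (v 0) (fImp (fOk 7 8 (tpm (v 1) (v 9)) 10) (fNot (fGAC 7 8 6 9 10))))))
         ltac:(apply P1_all; apply P1_all; apply P1_D0; reflexivity)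
         (env [zero; b; q; db; m0; k0; i]) (senv [V; E])); auto.
  intro y. transitivity (forall d β, forall n', n' ≺ y -> okC d β (pairM b n') -> ~ GAC d β i n').
  { reflexivity. }
  split.
  - intros H n Hn HG. destruct (ok_ex (pairM b n)) as [d [β Hok]].
    apply (H d β n Hn). apply okC_iff; auto. apply (GAC_iff d β i n n); auto. apply le_refl.
  - intros H d β n Hn Hok HG. apply (H n Hn). apply okC_iff in Hok. apply (GAC_iff d β i n n); auto. apply le_refl.
Qed.

Lemma NN_uniq (i n n' : MA) : NN i n -> NN i n' -> n = n'.
Proof.
  intros [H1 H2] [H1' H2']. destruct (trich n n') as [H|[H|H]]; auto.
  - exfalso. eapply H2'; eauto.
  - exfalso. eapply H2; eauto.
Qed.

Definition Nx (i N x y : MA) := y ≺ b /\ (edge x i y /\ (alive N y (i ⊕ one) /\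
   forall y', y' ≺ y -> ~ (edge x i y' /\ alive N y' (i ⊕ one)))).

Lemma edge_lt_b (x i y : MA) : edge x i y -> y ≺ b.
Proof. intro H. apply edge_V in H. eapply V_lt. apply H. Qed.

Lemma Nx_ex (i N x : MA) : ext x i -> NN i N -> exists y, Nx i N x y.
Proof.
  intros Hx [[j [Hij [Hk [HjN Hs]]]] _].
  assert (HiN : i ≺ N) by (eapply lt_le_trans; eauto).
  destruct (alive_next N x i (Hx N (lt_le _ _ HiN)) HiN) as [y0 [He0 Ha0]].
  destruct (LNP (fun y => edge x i y /\ alive N y (i ⊕ one))
     (fAll 7 (fAll 8 (fImp (fOk 7 8 (tpm (v 1) (v 11)) 12) (fBAll 9 (v 0) (fNot (fAnd (fEdge (v 10) (v 6) (v 9))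
        (fAliveC 7 8 11 (v 9) (tS (v 6)) 12)))))))
     ltac:(apply P1_all; apply P1_all; apply P1_D0; reflexivity)
     (env [zero; b; q; db; m0; k0; i; zero; zero; zero; x; N]) (senv [V; E])) as [y [[He Ha] Hmin]].
  - intro z. transitivity (forall d β, okC d β (pairM b N) -> forall y', y' ≺ z -> ~ (edge x i y' /\ aliveC d β N y' (i ⊕ one))).
    { reflexivity. }
    split.
    + intros H y' Hy' [He Ha]. destruct (ok_ex (pairM b N)) as [d [β Hok]].
      apply (H d β (proj2 (okC_iff _ _ _) Hok) y' Hy'). split; auto.
      apply (alive_C d β N y' (i ⊕ one) N); auto. apply le_refl. eapply edge_lt_b; eauto.
    + intros H d β Hok y' Hy' [He Ha]. apply (H y' Hy'). split; auto. apply okC_iff in Hok.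
      apply (alive_C d β N y' (i ⊕ one) N); auto. apply le_refl. eapply edge_lt_b; eauto.
  - exists y0; auto.
  - exists y. split. eapply edge_lt_b; eauto. split; auto.
Qed.

Lemma Nx_uniq (i N x y y' : MA) : Nx i N x y -> Nx i N x y' -> y = y'.
Proof.
  intros [_ [H1 [H2 H3]]] [_ [H1' [H2' H3']]]. destruct (trich y y') as [H|[H|H]]; auto.
  - exfalso. eapply H3'; eauto.
  - exfalso. eapply H3; eauto.
Qed.

Definition Can (P : S A) (L : MA) := Path P L /\
  forall i x y, i ≺ L -> mem (pairM x i) P -> mem (pairM y (i ⊕ one)) P -> exists N, NN i N /\ Nx i N x y.

Lemma Can_uniq (P P' : S A) (L L' i x x' : MA) : Can P L -> Can P' L' -> i ≼ L -> i ≼ L' ->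
  mem (pairM x i) P -> mem (pairM x' i) P' -> x = x'.
Proof.
  intros HC HC' HiL HiL' Hx Hx'.
  assert (Hb1 : x ≺ b) by (eapply Path_lt_b; [apply HC|..]; eauto).
  assert (Hb2 : x' ≺ b) by (eapply Path_lt_b; [apply HC'|..]; eauto).
  revert x x' Hx Hx' Hb1 Hb2 HiL HiL'. revert i.
  cut (forall i : MA, i ≼ L -> i ≼ L' -> forall x, x ≺ b -> forall x', x' ≺ b ->
         mem (pairM x i) P -> mem (pairM x' i) P' -> x = x').
  { intros H i x x' Hx Hx' Hb1 Hb2 HiL HiL'. eapply H; eauto. }
  match goal with |- forall m, @?PP m =>
  apply (IND0 (fImp (fLe (v 0) (v 6)) (fImp (fLe (v 0) (v 7)) (fBAll 8 (v 1) (fBAll 9 (v 1)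
     (fImp (fMem (tpm (v 8) (v 0)) 3) (fImp (fMem (tpm (v 9) (v 0)) 4) (fEq (v 8) (v 9))))))))
     eq_refl (env [zero; b; q; db; m0; k0; L; L']) (senv [V; E; s0; P; P']) PP); [intro; reflexivity| |] end.
  - intros _ _ x Hx x' Hx' H1 H2.
    assert (x = q) by (eapply Path_uniq; [apply HC|apply le_0|exact H1|apply HC]).
    assert (x' = q) by (eapply Path_uniq; [apply HC'|apply le_0|exact H2|apply HC']). congruence.
  - intros i IH HiL HiL' y Hy y' Hy' H1 H2.
    assert (Hi1 : i ≺ L) by (apply lt_S_le; auto). assert (Hi2 : i ≺ L') by (apply lt_S_le; auto).
    destruct (proj1 (proj2 (proj1 HC)) i (lt_le _ _ Hi1)) as [z [Hz _]].
    destruct (proj1 (proj2 (proj1 HC')) i (lt_le _ _ Hi2)) as [z' [Hz' _]].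
    assert (z = z').
    { apply (IH (lt_le _ _ Hi1) (lt_le _ _ Hi2) z (Path_lt_b P L i z (proj1 HC) (lt_le _ _ Hi1) Hz)
             z' (Path_lt_b P' L' i z' (proj1 HC') (lt_le _ _ Hi2) Hz') Hz Hz'). }
    subst z'.
    destruct (proj2 HC i z y Hi1 Hz H1) as [N [HN HNx]].
    destruct (proj2 HC' i z y' Hi2 Hz' H2) as [N' [HN' HNx']].
    assert (N = N') by (eapply NN_uniq; eauto). subst N'. eapply Nx_uniq; eauto.
Qed.

Lemma EndExt (P : S A) (L x : MA) : Can P L -> mem (pairM x L) P -> ext x L.
Proof.
  intros HC Hx. destruct (zero_or_succ L) as [->|[L' ->]].
  - assert (x = q) by (eapply Path_uniq; [apply HC|apply le_0|exact Hx|apply HC]). subst.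
    intros n _. apply alive_q.
  - destruct (proj1 (proj2 (proj1 HC)) L' (lt_le _ _ (lt_S L'))) as [x' [Hx' _]].
    destruct (proj2 HC L' x' x (lt_S L') Hx' Hx) as [N [[[j [Hij HG]] _] [_ [_ [Ha _]]]]].
    eapply ext_via; eauto. apply lt_S_le; auto.
Qed.

Definition NNC (d β i N : MA) := GAC d β i N /\ forall n', n' ≺ N -> ~ GAC d β i n'.
Definition fNNC (vd vb vi vN bb : nat) : form :=
  fAnd (fGAC vd vb vi vN bb) (fBAll bb (v vN) (fNot (fGAC vd vb vi bb (bb+1)))).
Definition NxC (d β i N x y : MA) := y ≺ b /\ (edge x i y /\ (aliveC d β N y (i ⊕ one) /\
   forall y', y' ≺ y -> ~ (edge x i y' /\ aliveC d β N y' (i ⊕ one)))).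
Definition fNxC (vd vb vi vN vx vy bb : nat) : form :=
  fAnd (fLt (v vy) (v 1)) (fAnd (fEdge (v vx) (v vi) (v vy)) (fAnd (fAliveC vd vb vN (v vy) (tS (v vi)) bb)
    (fBAll bb (v vy) (fNot (fAnd (fEdge (v vx) (v vi) (v bb)) (fAliveC vd vb vN (v bb) (tS (v vi)) (bb+1))))))).

Lemma NNC_iff (d β i N S' : MA) : ok d β (pairM b S') -> N ≼ S' -> (NNC d β i N <-> NN i N).
Proof.
  intros Hok HNS. split.
  - intros [H1 H2]. split. apply (GAC_iff d β i N S'); auto.
    intros n' Hn' HG. apply (H2 n' Hn'). apply (GAC_iff d β i n' S'); auto. left; eapply lt_le_trans; eauto.
  - intros [H1 H2]. split. apply (GAC_iff d β i N S'); auto.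
    intros n' Hn' HG. apply (H2 n' Hn'). apply (GAC_iff d β i n' S'); auto. left; eapply lt_le_trans; eauto.
Qed.

Lemma NxC_iff (d β i N x y S' : MA) : ok d β (pairM b S') -> N ≼ S' -> (NxC d β i N x y <-> Nx i N x y).
Proof.
  intros Hok HNS. split.
  - intros [Hy [He [Ha Hm]]]. split; auto. split; auto. split.
    + apply (alive_C d β N y (i ⊕ one) S'); auto.
    + intros y' Hy' [He' Ha']. apply (Hm y' Hy'). split; auto. apply (alive_C d β N y' (i ⊕ one) S'); auto.
      eapply lt_trans; eauto.
  - intros [Hy [He [Ha Hm]]]. split; auto. split; auto. split.
    + apply (alive_C d β N y (i ⊕ one) S'); auto.
    + intros y' Hy' [He' Ha']. apply (Hm y' Hy'). split; auto. apply (alive_C d β N y' (i ⊕ one) S'); auto.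
      eapply lt_trans; eauto.
Qed.

Definition CanCore (S' d β c L : MA) := okC d β (pairM b S') /\ (L ≼ S' /\ (c ≺ β ⊕ one /\ (PathC d c L /\
  forall i, i ≺ L -> forall x, x ≺ b -> forall y, y ≺ b ->
    dvdb (mu d (pairM x i)) c /\ dvdb (mu d (pairM y (i ⊕ one))) c ->
    exists N, N ≺ S' ⊕ one /\ (NNC d β i N /\ NxC d β i N x y)))).
Definition fCanCore (vS vd vb vc vL bb : nat) : form :=
  fAnd (fOk vd vb (tpm (v 1) (v vS)) bb) (fAnd (fLe (v vL) (v vS)) (fAnd (fLt (v vc) (tS (v vb)))
  (fAnd (fPathC vd vc vL bb) (fBAll bb (v vL) (fBAll (bb+1) (v 1) (fBAll (bb+2) (v 1)
    (fImp (fAnd (fDvd (bb+3) (tmu (v vd) (tpm (v (bb+1)) (v bb))) (v vc))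
                (fDvd (bb+3) (tmu (v vd) (tpm (v (bb+2)) (tS (v bb)))) (v vc)))
          (fBEx (bb+3) (tS (v vS)) (fAnd (fNNC vd vb bb (bb+3) (bb+4)) (fNxC vd vb bb (bb+3) (bb+1) (bb+2) (bb+4))))))))))).

Lemma CanCore_decode (S' d β c L : MA) : CanCore S' d β c L -> exists P, Can P L /\
  (forall x i, mem (pairM x i) P <-> x ≺ b /\ i ≼ L /\ dvdb (mu d (pairM x i)) c) /\
  (forall u, mem u P -> exists x i, u = pairM x i /\ i ≼ L).
Proof.
  intros [Hok [HLS [Hc [HC Hst]]]]. apply okC_iff in Hok.
  destruct (decode d c L HC) as [P [HP [Hm Hj]]]. exists P. split; [|split; auto].
  split; auto. intros i x y Hi Hx Hy. apply Hm in Hx. apply Hm in Hy.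
  destruct Hx as [Hx1 [_ Hx2]]. destruct Hy as [Hy1 [_ Hy2]].
  destruct (Hst i Hi x Hx1 y Hy1 (conj Hx2 Hy2)) as [N [HN [H1 H2]]].
  apply lt_S_iff in HN. exists N. split.
  - apply (NNC_iff d β i N S'); auto.
  - apply (NxC_iff d β i N x y S'); auto.
Qed.

Lemma CanCore_encode (S' d β L : MA) (P : S A) : Can P L -> ok d β (pairM b S') -> L ≼ S' ->
  (forall i, i ≺ L -> exists N, N ≼ S' /\ NN i N) ->
  exists c, CanCore S' d β c L /\ forall x i, x ≺ b -> i ≼ L -> (dvdb (mu d (pairM x i)) c <-> mem (pairM x i) P).
Proof.
  intros HC Hok HLS HNb. destruct (encode d β S' L P Hok HLS (proj1 HC)) as [c [Hc [HPC Hm]]].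
  exists c. split; auto. split. apply okC_iff; auto. split; auto. split; auto. split; auto.
  intros i Hi x Hx y Hy [H1 H2]. apply Hm in H1; [|auto|left; auto]. apply Hm in H2; [|auto|apply lt_S_le; auto].
  destruct (proj2 HC i x y Hi H1 H2) as [N [HN HNx]]. destruct (HNb i Hi) as [N' [HN'S HN']].
  assert (N = N') by (eapply NN_uniq; eauto). subst N'.
  exists N. split. apply le_S_lt; auto. split.
  - apply (NNC_iff d β i N S'); auto.
  - apply (NxC_iff d β i N x y S'); auto.
Qed.

Lemma psi_all (L : MA) : exists S' d β c, CanCore S' d β c L.
Proof.
  revert L. match goal with |- forall m, @?PP m =>
  apply (IND1 (fEx 6 (fEx 7 (fEx 8 (fEx 9 (fCanCore 6 7 8 9 0 10)))))
     ltac:(do 4 apply S1_ex; apply S1_D0; reflexivity)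
     (env [zero; b; q; db; m0; k0]) (senv [V; E]) PP); [intro; reflexivity| |] end.
  - destruct (Hfin zero) as [P HP]. apply finPath_Path in HP.
    destruct (ok_ex (pairM b zero)) as [d [β Hok]].
    destruct (CanCore_encode zero d β zero P) as [c [Hc _]]; auto.
    + split; auto. intros i x y Hi. exfalso; eapply lt_0; eauto.
    + apply le_refl.
    + intros i Hi. exfalso; eapply lt_0; eauto.
    + exists zero, d, β, c. exact Hc.
  - intros L [S' [d [β [c Hc]]]].
    pose proof Hc as [Hok [HLS _]]. apply okC_iff in Hok.
    destruct (CanCore_decode S' d β c L Hc) as [P [HC [Hm Hj]]].
    destruct (proj1 (proj2 (proj1 HC)) L (le_refl _)) as [x [Hx _]].
    assert (Hext : ext x L) by (eapply EndExt; eauto).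
    destruct (NN_ex L) as [N HN].
    destruct (Nx_ex L N x Hext HN) as [y Hy].
    destruct (comp0 (fOr (fMem (v 0) 3) (fEq (v 0) (tpm (v 6) (v 7)))) eq_refl
       (env [zero; b; q; db; m0; k0; y; L ⊕ one]) (senv [V; E; s0; P])) as [P' HP'].
    assert (HP'm : forall u, mem u P' <-> mem u P \/ u = pairM y (L ⊕ one)) by (intro u; rewrite HP'; reflexivity).
    assert (HLN : L ⊕ one ≼ N).
    { destruct HN as [[j [Hj1 [_ [Hj2 _]]]] _]. apply lt_S_le. eapply lt_le_trans; eauto. }
    assert (HinP : forall x' i, mem (pairM x' i) P -> i ≼ L).
    { intros x' i H. destruct (Hj _ H) as [x'' [i' [Heq Hi']]]. apply pm_inj2 in Heq. subst; auto. }
    assert (Hlev : forall x' i, i ≼ L -> (mem (pairM x' i) P' <-> mem (pairM x' i) P)).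
    { intros x' i Hi. rewrite HP'm. split; [|auto]. intros [H|H]; auto. apply pm_inj2 in H. subst.
      exfalso. eapply lt_not_le; [apply lt_S|exact Hi]. }
    assert (Htop : forall x', mem (pairM x' (L ⊕ one)) P' <-> x' = y).
    { intros x'. rewrite HP'm. split.
      - intros [H|H]. apply HinP in H. exfalso; eapply lt_not_le; [apply lt_S|exact H]. apply pm_inj1 in H; auto.
      - intros ->. right; reflexivity. }
    assert (HC' : Can P' (L ⊕ one)).
    { pose proof (proj1 HC) as [A1 [B1 [C1 D1]]]. split; [split; [|split; [|split]]|].
      - apply Hlev; auto. apply le_0.
      - intros i Hi. destruct Hi as [Hi|Hi].
        + apply lt_S_iff in Hi. destruct (B1 i Hi) as [z [Hz Hu]]. exists z. split. apply Hlev; auto.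
          intros x' Hx'. apply Hu. apply Hlev in Hx'; auto.
        + subst i. exists y. split. apply Htop; auto. intros x' Hx'. apply Htop; auto.
      - intros i x1 x2 Hi H1 H2. apply lt_S_iff in Hi. destruct Hi as [Hi|Hi].
        + apply Hlev in H1; [|left; auto]. apply Hlev in H2; [|apply lt_S_le; auto]. apply C1; auto.
        + subst i. apply Hlev in H1; [|apply le_refl]. apply Htop in H2. subst x2.
          assert (x1 = x) by (eapply Path_uniq; [apply HC|apply le_refl|exact H1|exact Hx]). subst x1.
          apply Hy.
      - intros i x' Hi Hx'. destruct Hi as [H|H].
        + apply lt_S_iff in H. apply Hlev in Hx'; auto.
        + subst i. apply Htop in Hx'. subst x'. apply edge_V with (x := x). apply Hy.
      - intros i x1 x2 Hi H1 H2. apply lt_S_iff in Hi. destruct Hi as [Hi|Hi].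
        + apply Hlev in H1; [|left; auto]. apply Hlev in H2; [|apply lt_S_le; auto]. apply (proj2 HC); auto.
        + subst i. apply Hlev in H1; [|apply le_refl]. apply Htop in H2. subst x2.
          assert (x1 = x) by (eapply Path_uniq; [apply HC|apply le_refl|exact H1|exact Hx]). subst x1.
          exists N; auto. }
    assert (HS : exists S2, S' ≼ S2 /\ N ≼ S2).
    { destruct (trich S' N) as [H|[H|H]]. exists N; split; [left; auto|apply le_refl].
      subst; exists N; split; apply le_refl. exists S'; split; [apply le_refl|left; auto]. }
    destruct HS as [S2 [HSa HSb]].
    destruct (ok_ex (pairM b S2)) as [d' [β' Hok']].
    destruct (CanCore_encode S2 d' β' (L ⊕ one) P' HC' Hok') as [c' [Hc' _]].
    + eapply le_trans; eauto.
    + intros i Hi. apply lt_S_iff in Hi. destruct Hi as [Hi|Hi].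
      * pose proof (proj1 (proj2 (proj1 HC))) as B1.
        destruct (B1 i (lt_le _ _ Hi)) as [z [Hz _]]. destruct (B1 (i ⊕ one) (proj1 (lt_S_le _ _) Hi)) as [z' [Hz' _]].
        apply Hm in Hz. apply Hm in Hz'. destruct Hz as [Hz1 [_ Hz2]]. destruct Hz' as [Hz1' [_ Hz2']].
        destruct (proj2 (proj2 (proj2 (proj2 Hc))) i Hi z Hz1 z' Hz1' (conj Hz2 Hz2')) as [N' [HN' [HNN _]]].
        apply lt_S_iff in HN'. exists N'. split. eapply le_trans; eauto. apply (NNC_iff d β i N' S'); auto.
      * subst i. exists N. split; auto.
    + exists S2, d', β', c'. exact Hc'.
Qed.


Definition PhiInf (u : MA) := exists x i L S' d β c, x ≺ b /\ (u = pairM x i /\ (i ≼ L /\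
   (CanCore S' d β c L /\ dvdb (mu d u) c))).
Definition fPhiInf : form :=
  fEx 6 (fEx 7 (fEx 8 (fEx 9 (fEx 10 (fEx 11 (fEx 12 (fAnd (fLt (v 6) (v 1)) (fAnd (fEq (v 0) (tpm (v 6) (v 7)))
    (fAnd (fLe (v 7) (v 8)) (fAnd (fCanCore 9 10 11 12 8 13) (fDvd 13 (tmu (v 10) (v 0)) (v 12)))))))))))).
Definition PsiInf (u : MA) := forall L S' d β c, (exists x, x ≺ b /\ exists i, i ≺ u ⊕ one /\ u = pairM x i) /\
   (forall x, x ≺ b -> forall i, i ≺ u ⊕ one -> u = pairM x i /\ (i ≼ L /\ CanCore S' d β c L) -> dvdb (mu d u) c).
Definition fPsiInf : form :=
  fAll 8 (fAll 9 (fAll 10 (fAll 11 (fAll 12 (fAnd (fBEx 6 (v 1) (fBEx 7 (tS (v 0)) (fEq (v 0) (tpm (v 6) (v 7)))))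
    (fBAll 6 (v 1) (fBAll 7 (tS (v 0)) (fImp (fAnd (fEq (v 0) (tpm (v 6) (v 7))) (fAnd (fLe (v 7) (v 8))
       (fCanCore 9 10 11 12 8 13))) (fDvd 13 (tmu (v 10) (v 0)) (v 12)))))))))).

Lemma PhiInf_uniq (x i L y : MA) (P : S A) : PhiInf (pairM x i) -> Can P L -> i ≼ L -> mem (pairM y i) P -> x = y.
Proof.
  intros [x2 [i2 [L2 [S2 [d2 [β2 [c2 [Hx2 [Hu [HiL2 [HC2 Hd2]]]]]]]]]]] HC HiL Hy.
  pose proof (pm_inj _ _ _ _ Hu) as [-> ->].
  destruct (CanCore_decode S2 d2 β2 c2 L2 HC2) as [P2 [HCan2 [Hm2 _]]].
  eapply (Can_uniq P2 P L2 L i2); eauto. apply Hm2. auto.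
Qed.

Lemma Phi_Psi (u : MA) : PhiInf u <-> PsiInf u.
Proof.
  split.
  - intros HPh. pose proof HPh as [x [i [L [S' [d [β [c [Hx [Hu [HiL [HC Hd]]]]]]]]]]].
    intros L2 S2 d2 β2 c2. split.
    + exists x. split; auto. exists i. split; auto. apply le_S_lt. rewrite Hu. apply le_pm_r.
    + intros x' Hx' i' Hi' [Hu' [HiL2 HC2]]. rewrite Hu in Hu'. pose proof (pm_inj _ _ _ _ Hu') as [<- <-].
      destruct (CanCore_decode S2 d2 β2 c2 L2 HC2) as [P2 [HCan2 [Hm2 _]]].
      destruct (proj1 (proj2 (proj1 HCan2)) i HiL2) as [z [Hz _]].
      assert (x = z) by (eapply PhiInf_uniq; [rewrite <- Hu; exact HPh|exact HCan2|exact HiL2|exact Hz]). subst z.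
      apply Hm2 in Hz. rewrite Hu. apply Hz.
  - intros H. destruct (H zero zero zero zero zero) as [[x [Hx [i [Hi Hu]]]] _].
    destruct (psi_all i) as [S' [d [β [c HC]]]].
    exists x, i, i, S', d, β, c. split; auto. split; auto. split. apply le_refl. split; auto.
    apply (proj2 (H i S' d β c) x Hx i Hi). split; auto. split; auto. apply le_refl.
Qed.

Lemma Pinf_exists : exists X : S A, forall u, mem u X <-> PhiInf u.
Proof.
  destruct (ax_Delta01_CA _ R fPhiInf fPsiInf
     ltac:(do 7 apply S1_ex; apply S1_D0; reflexivity)
     ltac:(do 5 apply P1_all; apply P1_D0; reflexivity)
     0 (env [zero; b; q; db; m0; k0]) (senv [V; E])) as [X HX].
  - intro u. transitivity (PhiInf u). reflexivity. transitivity (PsiInf u). apply Phi_Psi. reflexivity.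
  - exists X. intro u. rewrite HX. reflexivity.
Qed.

Lemma final : exists P, infPath V E q P.
Proof.
  destruct Pinf_exists as [X HX]. exists X. split; [|split; [|split]].
  - intros u Hu. apply HX in Hu. destruct Hu as [x [i [L [S' [d [β [c [Hx [-> [HiL [HC Hd]]]]]]]]]]].
    destruct HC as [_ [_ [_ [HPC _]]]]. apply (proj2 (proj2 (proj2 HPC)) i (le_S_lt _ _ HiL) x Hx Hd).
  - apply HX. destruct (psi_all zero) as [S' [d [β [c HC]]]].
    exists q, zero, zero, S', d, β, c. split. apply q_lt_b. split; auto. split. apply le_refl. split; auto.
    apply (proj1 (proj1 (proj2 (proj2 (proj2 HC))))).
  - intro i. destruct (psi_all i) as [S' [d [β [c HC]]]].
    destruct (proj1 (proj2 (proj1 (proj2 (proj2 (proj2 HC))))) i (lt_S i)) as [x [Hx [Hd _]]].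
    exists x. split.
    + apply HX. exists x, i, i, S', d, β, c. split; auto. split; auto. split. apply le_refl. split; auto.
    + intros x'' Hx''. apply HX in Hx''.
      destruct (CanCore_decode S' d β c i HC) as [P [HCan [Hm _]]].
      eapply PhiInf_uniq; [exact Hx''|exact HCan|apply le_refl|]. apply Hm. split; auto. split; auto. apply le_refl.
  - intros i x1 x2 H1 H2. apply HX in H1. apply HX in H2.
    destruct (psi_all (i ⊕ one)) as [S' [d [β [c HC]]]].
    destruct (CanCore_decode S' d β c (i ⊕ one) HC) as [P [HCan [Hm _]]].
    pose proof (proj1 HCan) as [_ [B1 [C1 _]]].
    destruct (B1 i (lt_le _ _ (lt_S i))) as [y1 [Hy1 _]].
    destruct (B1 (i ⊕ one) (le_refl _)) as [y2 [Hy2 _]].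
    assert (x1 = y1) by (eapply PhiInf_uniq; [exact H1|exact HCan|apply lt_le, lt_S|exact Hy1]).
    assert (x2 = y2) by (eapply PhiInf_uniq; [exact H2|exact HCan|apply le_refl|exact Hy2]).
    subst. apply C1; auto. apply lt_S.
Qed.

End Fixed.
End BW.
End Main.

Theorem mainTheorem12 :
  forall A : L2str, RCA0 A -> Sigma02_IND A -> BWKL A.
Proof.
  intros A R H2 Q V E [b Hb] HV HE q Hfin.
  destruct (fact_ex A R Q b) as [db Hdb].
  destruct (exists_m0 A R Q b Q V E q Hb HV Hfin H2 db Hdb) as [m0 [Hn Hp]].
  apply not_all_ex_not in Hn. destruct Hn as [k0 Hk0].
  apply (final A R Q b Q V E q Hb HV HE Hfin H2 db Hdb m0 k0); auto.
  intros j n H1 H3 Hs. apply Hk0. exists j, n. auto.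
Qed.
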